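(* In the discrete model, let $s\in\mathcal S$ be a regular point. Let $\hat F_n$ be a maximum likelihood estimator, $\tilde F_n$ a naive estimator, and $\breve F_n$ the simple estimator $\breve F_{nk}(s)=N_k(s)/N(s)$ (with $0/0=0$). Then $$P\{\hat F_n(s)=\tilde F_n(s)=\breve F_n(s)\}\to 1\quad\text{as } n\to\infty.$$
   Context: Setting (discrete model): $K\ge1$ fixed; $(X,Y)$ random with $X\in\mathbb R$, $Y\in\{1,\dots,K\}$; $F_{0k}(t)=P(X\le t,Y=k)$, $k=1,\dots,K$. $C$ is independent of $(X,Y)$ with discrete distribution $G$, support $\mathcal S=\{s:G(\{s\})>0\}$ (countable, possibly infinite). Observed: $(C,\Delta)$, $\Delta_k=1\{X\le C,Y=k\}$ ($k\le K$), $\Delta_{K+1}=1\{X>C\}$; data are $n$ i.i.d. copies $(C_i,\Delta^i)$. Define $N_k(s)=\frac1n\sum_i\Delta_k^i1\{C_i=s\}$, $N(s)=\sum_{k=1}^{K+1}N_k(s)$. For a $K$-tuple $F$, $F_+=\sum_{k\le K}F_k$, $F_{K+1}=1-F_+$. $\mathcal F_K$ is the set of $K$-tuples $F=(F_1,\dots,F_K)$ of nonnegative nondecreasing functions with $F_+(s)\le1$ (constraints needed only at $s\in\mathcal S$). Log likelihood $l_n(F)=\sum_{s\in\mathcal S}\sum_{k=1}^{K+1}N_k(s)\log F_k(s)$ (convention $0\log0=0$). A maximum likelihood estimator is any $\hat F_n\in\mathcal F_K$ maximizing $l_n$ over $\mathcal F_K$. The naive estimator $\tilde F_n=(\tilde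 F_{n1},\dots,\tilde F_{nK})$ has $k$th component any maximizer over $\mathcal F_1$ (the case $K=1$ of $\mathcal F_K$) of $l_{nk}(F_k)=\sum_{s\in\mathcal S}[N_k(s)\log F_k(s)+\{N(s)-N_k(s)\}\log\{1-F_k(s)\}]$. Regular point: let $s_{\inf}=\inf\mathcal S$, $s_{\sup}=\sup\mathcal S$; for $s\in\mathcal S$, $s\ne s_{\inf}$, let $s_-=\sup\{x\in\mathcal S:x<s\}$, and for $s\ne s_{\sup}$ let $s_+=\inf\{x\in\mathcal S:x>s\}$. A point $s\in\mathcal S$ is regular if either $F_{0k}(s)=0$ for all $k=1,\dots,K$, or both: (i) if $s\ne s_{\inf}$ then $s_-\in\mathcal S$ and for each $k$ either $F_{0k}(s_-)<F_{0k}(s)$ or $F_{0k}(s)=0$; (ii) if $s\ne s_{\sup}$ then $s_+\in\mathcal S$ and for each $k$ either $F_{0k}(s)<F_{0k}(s_+)$ or $F_{0k}(s)=0$. *)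

(* Defs.v *)
From Stdlib Require Import Reals Lra List.
Import ListNotations.
Open Scope R_scope.

(* ---------- Model ----------
   Failure causes are indexed k = 0..K-1 (paper's k = 1..K); index K stands
   for the paper's K+1 (right censoring).  A K-tuple of functions is a
   function F : nat -> R -> R of which only components k < K matter.

   The discrete censoring law G is given by an enumeration c : nat -> R of
   atoms with weights w : nat -> R (w i >= 0, sum w = 1), so that
   G({s}) = sum_{i : c i = s} w i and S = { s | exists i, w i > 0 /\ c i = s }.

   An observation (C_j, Delta^j) is encoded as a pair (i, k) : nat * nat,
   meaning C_j = c i and Delta_k = 1 (k <= K).  A data set is a list of
   n such pairs. *)

Definition inS (c w : nat -> R) (s : R) : Prop :=
  exists i, 0 < w i /\ c i = s.

Definition Fplus (K : nat) (F : nat -> R -> R) (s : R) : R :=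
  fold_right Rplus 0 (map (fun k => F k s) (seq 0 K)).

Definition Fext (K : nat) (F : nat -> R -> R) (k : nat) (s : R) : R :=
  if Nat.ltb k K then F k s else 1 - Fplus K F s.

(* F0 is the K-tuple of sub-distribution functions F_{0k}(t) = P(X<=t, Y=k)
   of some random pair (X,Y) with X real, Y in {1..K}: each component is
   nondecreasing, right-continuous, tends to 0 at -oo, has a limit at +oo,
   and these limits sum to 1. *)
Definition valid_F0 (K : nat) (F0 : nat -> R -> R) : Prop :=
  (forall k, (k < K)%nat -> forall t u, t <= u -> F0 k t <= F0 k u) /\
  (forall k, (k < K)%nat -> forall t eps, 0 < eps ->
      exists d, 0 < d /\ forall u, t <= u < t + d -> Rabs (F0 k u - F0 k t) < eps) /\
  (forall k, (k < K)%nat -> forall eps, 0 < eps ->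
      exists M, forall t, t <= M -> Rabs (F0 k t) < eps) /\
  (exists Lim : nat -> R,
      (forall k, (k < K)%nat -> forall eps, 0 < eps ->
          exists M, forall t, M <= t -> Rabs (F0 k t - Lim k) < eps) /\
      fold_right Rplus 0 (map Lim (seq 0 K)) = 1).

Definition is_glb (E : R -> Prop) (m : R) : Prop :=
  (forall x, E x -> m <= x) /\ (forall b, (forall x, E x -> b <= x) -> b <= m).

Definition regular (K : nat) (F0 : nat -> R -> R) (c w : nat -> R) (s : R) : Prop :=
  (forall k, (k < K)%nat -> F0 k s = 0) \/
  (
    ((exists x, inS c w x /\ x < s) ->
       exists sm, is_lub (fun x => inS c w x /\ x < s) sm /\ inS c w sm /\
         forall k, (k < K)%nat -> F0 k sm < F0 k s \/ F0 k s = 0) /\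
    ((exists x, inS c w x /\ s < x) ->
       exists sp, is_glb (fun x => inS c w x /\ s < x) sp /\ inS c w sp /\
         forall k, (k < K)%nat -> F0 k s < F0 k sp \/ F0 k s = 0) ).

Definition obs := (nat * nat)%type.

Definition valid_data (K : nat) (w : nat -> R) (data : list obs) : Prop :=
  Forall (fun o => 0 < w (fst o) /\ (snd o <= K)%nat) data.

Definition Nk (c : nat -> R) (data : list obs) (k : nat) (s : R) : R :=
  INR (length (filter (fun o => andb (Nat.eqb (snd o) k)
                                    (if Req_EM_T (c (fst o)) s then true else false)) data))
  / INR (length data).

Definition Ntot (K : nat) (c : nat -> R) (data : list obs) (s : R) : R :=
  fold_right Rplus 0 (map (fun k => Nk c data k s) (seq 0 (S K))).

Definition breve (K : nat) (c : nat -> R) (data : list obs) (k : nat) (s : R) : R :=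
  if Req_EM_T (Ntot K c data s) 0 then 0 else Nk c data k s / Ntot K c data s.

(* the class F_K (constraints only at points of S) *)
Definition inFK (K : nat) (c w : nat -> R) (F : nat -> R -> R) : Prop :=
  (forall k, (k < K)%nat -> forall s, inS c w s -> 0 <= F k s) /\
  (forall k, (k < K)%nat -> forall s t, inS c w s -> inS c w t -> s <= t -> F k s <= F k t) /\
  (forall s, inS c w s -> Fplus K F s <= 1).

Definition inF1 (c w : nat -> R) (H : R -> R) : Prop :=
  inFK 1 c w (fun _ => H).

(* Likelihood L_n(F) = prod_j F_{k_j}(C_j) = exp(n * l_n(F)); maximizing l_n
   (with 0 log 0 = 0, log 0 = -oo) is the same as maximizing L_n. *)
Definition lik (K : nat) (c : nat -> R) (data : list obs) (F : nat -> R -> R) : R :=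
  fold_right Rmult 1 (map (fun o => Fext K F (snd o) (c (fst o))) data).

Definition isMLE (K : nat) (c w : nat -> R) (data : list obs) (F : nat -> R -> R) : Prop :=
  inFK K c w F /\ forall G, inFK K c w G -> lik K c data G <= lik K c data F.

Definition likk (c : nat -> R) (data : list obs) (k : nat) (H : R -> R) : R :=
  fold_right Rmult 1
    (map (fun o => if Nat.eqb (snd o) k then H (c (fst o)) else 1 - H (c (fst o))) data).

Definition isNaive (K : nat) (c w : nat -> R) (data : list obs) (F : nat -> R -> R) : Prop :=
  forall k, (k < K)%nat ->
    inF1 c w (F k) /\ forall H, inF1 c w H -> likk c data k H <= likk c data k (F k).

(* P(C = c i, Delta_k = 1) *)
Definition pobs (K : nat) (F0 : nat -> R -> R) (c w : nat -> R) (o : obs) : R :=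
  if Nat.leb (snd o) K then w (fst o) * Fext K F0 (snd o) (c (fst o)) else 0.

Definition psample (K : nat) (F0 : nat -> R -> R) (c w : nat -> R) (data : list obs) : R :=
  fold_right Rmult 1 (map (pobs K F0 c w) data).

Definition event_at (K : nat) (c : nat -> R) (Fhat Ftil : list obs -> nat -> R -> R)
    (s : R) (data : list obs) : Prop :=
  forall k, (k < K)%nat ->
    Fhat data k s = Ftil data k s /\ Ftil data k s = breve K c data k s.

(* Main.v *)
Require Import Defs.
From Stdlib Require Import Reals Lra Lia List Classical Bool ZArith.
Import ListNotations.
Open Scope R_scope.

Definition sumL {A} (f : A -> R) (l : list A) : R := fold_right (fun a r => f a + r) 0 l.
Definition prodL {A} (f : A -> R) (l : list A) : R := fold_right (fun a r => f a * r) 1 l.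

Lemma sumL_nil {A} (f : A -> R) : sumL f [] = 0. Proof. reflexivity. Qed.
Lemma sumL_cons {A} (f : A -> R) a l : sumL f (a :: l) = f a + sumL f l. Proof. reflexivity. Qed.
Lemma sumL_app {A} (f : A -> R) l1 l2 : sumL f (l1 ++ l2) = sumL f l1 + sumL f l2.
Proof. induction l1; simpl; [lra|]. unfold sumL in *; simpl in *. rewrite IHl1; lra. Qed.
Lemma sumL_ext {A} (f g : A -> R) l : (forall a, In a l -> f a = g a) -> sumL f l = sumL g l.
Proof. induction l; intros H; simpl; auto. rewrite (H a) by (left; auto). rewrite IHl; auto. intros; apply H; right; auto. Qed.
Lemma sumL_le {A} (f g : A -> R) l : (forall a, In a l -> f a <= g a) -> sumL f l <= sumL g l.
Proof. induction l; intros H; simpl; [lra|]. assert (f a <= g a) by (apply H; left; auto).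
  assert (sumL f l <= sumL g l) by (apply IHl; intros; apply H; right; auto). unfold sumL in *; simpl; lra. Qed.
Lemma sumL_nonneg {A} (f : A -> R) l : (forall a, In a l -> 0 <= f a) -> 0 <= sumL f l.
Proof. intros H. replace 0 with (sumL (fun _ => 0) l). apply sumL_le; auto.
  induction l; simpl; auto. unfold sumL in *; simpl in *; rewrite IHl; [lra|]. intros; apply H; right; auto. Qed.
Lemma sumL_plus {A} (f g : A -> R) l : sumL (fun a => f a + g a) l = sumL f l + sumL g l.
Proof. induction l; simpl; [lra|]. unfold sumL in *; simpl in *; rewrite IHl; lra. Qed.
Lemma sumL_minus {A} (f g : A -> R) l : sumL (fun a => f a - g a) l = sumL f l - sumL g l.
Proof. induction l; simpl; [lra|]. unfold sumL in *; simpl in *; rewrite IHl; lra. Qed.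
Lemma sumL_scal {A} (f : A -> R) r l : sumL (fun a => r * f a) l = r * sumL f l.
Proof. induction l; simpl; [lra|]. unfold sumL in *; simpl in *; rewrite IHl; lra. Qed.
Lemma sumL_const {A} r (l : list A) : sumL (fun _ => r) l = r * INR (length l).
Proof. induction l; [simpl; lra|]. change (length (a::l)) with (S (length l)). rewrite S_INR. unfold sumL in *; cbn [fold_right]. rewrite IHl. lra. Qed.
Lemma sumL_map {A B} (f : B -> R) (g : A -> B) l : sumL f (map g l) = sumL (fun a => f (g a)) l.
Proof. induction l; simpl; auto. unfold sumL in *; simpl in *; rewrite IHl; auto. Qed.
Lemma sumL_flat_map {A B} (f : B -> R) (g : A -> list B) l :
  sumL f (flat_map g l) = sumL (fun a => sumL f (g a)) l.
Proof. induction l; simpl; auto. rewrite sumL_app, IHl. reflexivity. Qed.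
Lemma sumL_swap {A B} (f : A -> B -> R) l1 l2 :
  sumL (fun a => sumL (fun b => f a b) l2) l1 = sumL (fun b => sumL (fun a => f a b) l1) l2.
Proof. induction l1; simpl.
  - change (0 = sumL (fun b => 0) l2). rewrite sumL_const; lra.
  - change (sumL (fun b => f a b) l2 + sumL (fun a0 => sumL (fun b => f a0 b) l2) l1 =
      sumL (fun b => f a b + sumL (fun a0 => f a0 b) l1) l2). rewrite IHl1.
    rewrite sumL_plus. reflexivity. Qed.
Lemma sumL_single {A} (f : A -> R) l x : (forall a, In a l -> 0 <= f a) -> In x l -> f x <= sumL f l.
Proof. induction l; intros H Hx; simpl in Hx; [contradiction|]. unfold sumL; simpl; fold (sumL f l).
  destruct Hx as [<-|Hx]. - assert (0 <= sumL f l) by (apply sumL_nonneg; intros; apply H; right; auto). lra.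
  - assert (f x <= sumL f l) by (apply IHl; auto; intros; apply H; right; auto). assert (0 <= f a) by (apply H; left; auto). lra. Qed.
Lemma sumL_zero_each {A} (f : A -> R) l : (forall a, In a l -> 0 <= f a) -> sumL f l = 0 -> forall a, In a l -> f a = 0.
Proof. intros H Hs a Ha. assert (f a <= sumL f l) by (apply sumL_single; auto). assert (0 <= f a) by auto. lra. Qed.

Lemma fold_sumL (f : nat -> R) l : fold_right Rplus 0 (map f l) = sumL f l.
Proof. induction l; simpl; auto. rewrite IHl; auto. Qed.

Lemma prodL_app {A} (f : A -> R) l1 l2 : prodL f (l1 ++ l2) = prodL f l1 * prodL f l2.
Proof. induction l1; simpl; [lra|]. unfold prodL in *; simpl in *; rewrite IHl1; lra. Qed.
Lemma prodL_nonneg {A} (f : A -> R) l : (forall a, In a l -> 0 <= f a) -> 0 <= prodL f l.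
Proof. induction l; intros H; simpl; [lra|]. unfold prodL in *; simpl. apply Rmult_le_pos. apply H; left; auto. apply IHl; intros; apply H; right; auto. Qed.
Lemma prodL_le {A} (f g : A -> R) l : (forall a, In a l -> 0 <= f a <= g a) -> prodL f l <= prodL g l.
Proof. induction l; intros H; simpl; [lra|]. unfold prodL in *; simpl.
  assert (Ha: 0 <= f a <= g a) by (apply H; left; auto).
  assert (0 <= fold_right (fun a r => f a * r) 1 l) by (apply prodL_nonneg; intros; apply H; right; auto).
  assert (fold_right (fun a r => f a * r) 1 l <= fold_right (fun a r => g a * r) 1 l) by (apply IHl; intros; apply H; right; auto).
  apply Rmult_le_compat; lra. Qed.
Lemma prodL_pos_each {A} (f : A -> R) l : (forall a, In a l -> 0 <= f a) -> 0 < prodL f l -> forall a, In a l -> 0 < f a.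
Proof. induction l; intros H Hp b Hb; simpl in Hb; [contradiction|]. unfold prodL in Hp; simpl in Hp. fold (prodL f l) in Hp.
  assert (0 <= f a) by (apply H; left; auto). assert (0 <= prodL f l) by (apply prodL_nonneg; intros; apply H; right; auto).
  destruct Hb as [<-|Hb].
  - destruct (Req_dec (f a) 0) as [E|E]; [rewrite E in Hp; lra|lra].
  - apply IHl; auto. intros; apply H; right; auto. destruct (Req_dec (prodL f l) 0) as [E|E]; [rewrite E in Hp; lra|lra]. Qed.
Lemma prodL_pos {A} (f : A -> R) l : (forall a, In a l -> 0 < f a) -> 0 < prodL f l.
Proof. induction l; intros H; simpl; [lra|]. unfold prodL in *; simpl. apply Rmult_lt_0_compat. apply H; left; auto. apply IHl; intros; apply H; right; auto. Qed.
Lemma ln_prodL {A} (f : A -> R) l : (forall a, In a l -> 0 < f a) -> ln (prodL f l) = sumL (fun a => ln (f a)) l.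
Proof. induction l; intros H; simpl. apply ln_1. unfold prodL, sumL in *; simpl.
  rewrite ln_mult. rewrite IHl; auto. intros; apply H; right; auto. apply H; left; auto.
  apply prodL_pos; intros; apply H; right; auto. Qed.
Lemma prodL_mult {A} (f g : A -> R) l : prodL (fun a => f a * g a) l = prodL f l * prodL g l.
Proof. induction l; simpl; [lra|]. unfold prodL in *; simpl in *. rewrite IHl; lra. Qed.
Lemma prodL_inv {A} (f : A -> R) l : (forall a, In a l -> f a <> 0) -> prodL (fun a => / f a) l = / prodL f l.
Proof. induction l; intros H; simpl. unfold prodL; simpl; lra. unfold prodL in *; simpl in *.
  rewrite IHl. rewrite Rinv_mult. auto. intros; apply H; right; auto. Qed.

Lemma ln_le_xm1 x : 0 < x -> ln x <= x - 1.
Proof. intros Hx. pose proof (exp_ineq1_le (ln x)). rewrite exp_ln in H; lra. Qed.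
Lemma ln_eq_xm1 x : 0 < x -> ln x = x - 1 -> x = 1.
Proof. intros Hx E. destruct (Req_dec (ln x) 0) as [Z|Z]. lra.
  pose proof (exp_ineq1 (ln x) Z). rewrite exp_ln in H; lra. Qed.

Lemma prod_le1_suminv {A} (y : A -> R) l : (forall a, In a l -> 0 < y a) -> prodL y l <= 1 ->
  INR (length l) <= sumL (fun a => / y a) l.
Proof. intros Hp H1.
  assert (Hs: sumL (fun a => ln (y a)) l <= 0).
  { rewrite <- ln_prodL by auto. rewrite <- ln_1. destruct (Req_dec (prodL y l) 1) as [E|E]. rewrite E; lra.
    left. apply ln_increasing. apply prodL_pos; auto. lra. }
  assert (sumL (fun a => 1 - ln (y a)) l <= sumL (fun a => / y a) l).
  { apply sumL_le. intros a Ha. pose proof (Hp a Ha). pose proof (ln_le_xm1 (/ y a) (Rinv_0_lt_compat _ H)).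
    rewrite ln_Rinv in H0 by auto. lra. }
  rewrite sumL_minus, sumL_const in H. lra. Qed.
Lemma prodL_ext {A} (f g : A -> R) l : (forall a, In a l -> f a = g a) -> prodL f l = prodL g l.
Proof. induction l; intros H; simpl; auto. unfold prodL in *; simpl. rewrite (H a) by (left; auto). rewrite IHl; auto. intros; apply H; right; auto. Qed.

Lemma Fplus_sumL K F s : Fplus K F s = sumL (fun k => F k s) (seq 0 K).
Proof. unfold Fplus. apply (fold_sumL (fun k => F k s)). Qed.

Lemma Fext_lt K F k s : (k < K)%nat -> Fext K F k s = F k s.
Proof. intros H. unfold Fext. destruct (Nat.ltb_spec k K); [auto|lia]. Qed.
Lemma Fext_ge K F k s : (K <= k)%nat -> Fext K F k s = 1 - Fplus K F s.
Proof. intros H. unfold Fext. destruct (Nat.ltb_spec k K); [lia|auto]. Qed.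

Lemma Fext_sum K F s : sumL (fun k => Fext K F k s) (seq 0 (S K)) = 1.
Proof. rewrite seq_S, sumL_app. change (0 + K)%nat with K.
  change (sumL (fun k => Fext K F k s) [K]) with (Fext K F K s + 0). rewrite Fext_ge by lia. rewrite Fplus_sumL.
  rewrite (sumL_ext _ (fun k => F k s)). lra.
  intros a Ha. apply in_seq in Ha. apply Fext_lt; lia. Qed.

Lemma Fplus_nonneg K c w F x : inFK K c w F -> inS c w x -> 0 <= Fplus K F x.
Proof. intros [H1 _] Hx. rewrite Fplus_sumL. apply sumL_nonneg. intros k Hk; apply in_seq in Hk. apply H1; auto; lia. Qed.

Lemma Fext_nonneg K c w F k x : inFK K c w F -> inS c w x -> 0 <= Fext K F k x.
Proof. intros HF Hx. destruct (Nat.lt_ge_cases k K).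
  - rewrite Fext_lt by auto. destruct HF as [H1 _]. apply H1; auto.
  - rewrite Fext_ge by auto. destruct HF as [_ [_ H3]]. pose proof (H3 x Hx). lra. Qed.

Lemma Fext_le1 K c w F k x : inFK K c w F -> inS c w x -> Fext K F k x <= 1.
Proof. intros HF Hx. destruct (Nat.lt_ge_cases k K).
  - rewrite Fext_lt by auto. destruct HF as [H1 [_ H3]]. pose proof (H3 x Hx).
    assert (F k x <= Fplus K F x). { rewrite Fplus_sumL. apply (sumL_single (fun k => F k x)).
      intros a Ha; apply in_seq in Ha; apply H1; auto; lia. apply in_seq; lia. } lra.
  - rewrite Fext_ge by auto. pose proof (Fplus_nonneg _ _ _ _ _ HF Hx). lra. Qed.

Lemma lik_prodL K c d F : lik K c d F = prodL (fun o : obs => Fext K F (snd o) (c (fst o))) d.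
Proof. unfold lik, prodL. induction d; simpl; auto. rewrite IHd; auto. Qed.

Definition avgF (F G : nat -> R -> R) : nat -> R -> R := fun k x => (F k x + G k x) / 2.

Lemma Fplus_avg K F G x : Fplus K (avgF F G) x = (Fplus K F x + Fplus K G x) / 2.
Proof. rewrite !Fplus_sumL. unfold avgF. rewrite (sumL_ext _ (fun k => /2 * (F k x + G k x))).
  rewrite sumL_scal, sumL_plus. lra. intros; lra. Qed.

Lemma Fext_avg K F G k x : Fext K (avgF F G) k x = (Fext K F k x + Fext K G k x) / 2.
Proof. destruct (Nat.lt_ge_cases k K).
  - rewrite !Fext_lt by auto. reflexivity.
  - rewrite !Fext_ge by auto. rewrite Fplus_avg. lra. Qed.

Lemma inFK_avg K c w F G : inFK K c w F -> inFK K c w G -> inFK K c w (avgF F G).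
Proof. intros [F1 [F2 F3]] [G1 [G2 G3]]. unfold avgF. split; [|split].
  - intros k Hk s Hs. pose proof (F1 k Hk s Hs). pose proof (G1 k Hk s Hs). lra.
  - intros k Hk s t Hs Ht Hst. pose proof (F2 k Hk s t Hs Ht Hst). pose proof (G2 k Hk s t Hs Ht Hst). lra.
  - intros s Hs. fold (avgF F G). rewrite Fplus_avg. pose proof (F3 s Hs). pose proof (G3 s Hs). lra. Qed.

Lemma valid_F0_inFK K F0 c w : valid_F0 K F0 -> inFK K c w F0.
Proof. intros [Hm [_ [Hl [Lim [HL HS]]]]].
  assert (Hnn: forall k, (k < K)%nat -> forall t, 0 <= F0 k t).
  { intros k Hk t. apply Rnot_lt_le. intros Hneg. destruct (Hl k Hk (- F0 k t)) as [M HM]. lra.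
    pose proof (HM (Rmin M t) (Rmin_l _ _)). pose proof (Hm k Hk (Rmin M t) t (Rmin_r _ _)).
    unfold Rabs in H; destruct (Rcase_abs _); lra. }
  assert (Hub: forall k, (k < K)%nat -> forall t, F0 k t <= Lim k).
  { intros k Hk t. apply Rnot_lt_le. intros Hgt. destruct (HL k Hk (F0 k t - Lim k)) as [M HM]. lra.
    pose proof (HM (Rmax M t) (Rmax_l _ _)). pose proof (Hm k Hk t (Rmax M t) (Rmax_r _ _)).
    unfold Rabs in H; destruct (Rcase_abs _); lra. }
  split; [|split].
  - intros; apply Hnn; auto.
  - intros; apply Hm; auto.
  - intros s _. rewrite Fplus_sumL. rewrite fold_sumL in HS. rewrite <- HS. apply sumL_le.
    intros k Hk; apply in_seq in Hk; apply Hub; lia. Qed.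

Lemma valid_data_inS K c w d o : valid_data K w d -> In o d -> inS c w (c (fst o)).
Proof. intros Hv Ho. unfold valid_data in Hv. rewrite Forall_forall in Hv. destruct (Hv o Ho). exists (fst o); auto. Qed.

Lemma mle_basic K c w d F G :
  valid_data K w d -> inFK K c w F -> inFK K c w G ->
  (forall H, inFK K c w H -> lik K c d H <= lik K c d F) ->
  (forall o, In o d -> 0 < Fext K G (snd o) (c (fst o))) ->
  sumL (fun o : obs => 2 * Fext K G (snd o) (c (fst o)) / (Fext K G (snd o) (c (fst o)) + Fext K F (snd o) (c (fst o)))) d
    <= INR (length d).
Proof. intros Hv HF HG Hmax Hpos.
  set (A := fun o : obs => Fext K G (snd o) (c (fst o))). set (B := fun o : obs => Fext K F (snd o) (c (fst o))).
  assert (HB0: forall o, In o d -> 0 <= B o) by (intros; apply (Fext_nonneg K c w); auto; eapply valid_data_inS; eauto).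
  assert (HlikG: 0 < lik K c d G) by (rewrite lik_prodL; apply prodL_pos; auto).
  assert (HlikF: 0 < lik K c d F) by (pose proof (Hmax G HG); lra).
  assert (HBp: forall o, In o d -> 0 < B o).
  { rewrite lik_prodL in HlikF. apply prodL_pos_each; auto. }
  assert (Hav := Hmax _ (inFK_avg _ _ _ _ _ HF HG)).
  rewrite !lik_prodL in Hav.
  assert (Hy: prodL (fun o : obs => (A o + B o) / (2 * B o)) d <= 1).
  { rewrite (prodL_ext _ (fun o : obs => Fext K (avgF F G) (snd o) (c (fst o)) * / B o)).
    rewrite prodL_mult, prodL_inv. fold B in Hav.
    assert (0 < prodL B d) by (apply prodL_pos; auto).
    apply (Rmult_le_reg_r (prodL B d)); auto. rewrite Rmult_assoc, Rinv_l by lra. unfold obs in *. lra.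
    intros o Ho; pose proof (HBp o Ho); lra.
    intros o Ho. rewrite Fext_avg. fold (A o) (B o). pose proof (HBp o Ho). field. lra. }
  assert (Hpy: forall o, In o d -> 0 < (A o + B o) / (2 * B o)).
  { intros o Ho. pose proof (HBp o Ho). pose proof (Hpos o Ho). fold (A o) in H0. apply Rdiv_lt_0_compat; lra. }
  pose proof (prod_le1_suminv _ _ Hpy Hy) as Hs.
  rewrite (sumL_ext _ (fun o : obs => 2 - 2 * B o / (A o + B o))).
  rewrite sumL_minus, sumL_const.
  rewrite (sumL_ext _ (fun o : obs => 2 * B o / (A o + B o))) in Hs. unfold A, B, obs in *. lra.
  intros o Ho. pose proof (HBp o Ho). pose proof (Hpos o Ho). fold (A o) in H0. field. lra.
  intros o Ho. pose proof (HBp o Ho). pose proof (Hpos o Ho). fold (A o) in H0. fold (A o) (B o). field. lra.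
Qed.

Definition cnt (p : obs -> bool) (d : list obs) : R := sumL (fun o => if p o then 1 else 0) d.

Lemma term_ineq a b : 0 <= a <= 1 -> 0 <= b <= 1 ->
  a + (a - b) / 2 + (a - b)^2 / 4 <= a * (2 * a / (a + b)).
Proof. intros Ha Hb. destruct (Req_dec (a + b) 0) as [E|E].
  - assert (a = 0) by lra. assert (b = 0) by lra. subst. replace (0+0) with 0 by lra. unfold Rdiv. rewrite Rinv_0. lra.
  - assert (Hab: 0 < a + b) by lra.
    replace (a * (2 * a / (a + b))) with (a + (a-b)/2 + (a-b)^2 / (2 * (a+b))) by (field; lra).
    assert ((a-b)^2/4 <= (a-b)^2 / (2*(a+b))).
    { unfold Rdiv. apply Rmult_le_compat_l. apply pow2_ge_0. apply Rinv_le_contravar; lra. } lra. Qed.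

Lemma G_bounds a b : 0 <= a <= 1 -> 0 <= b <= 1 -> 0 <= 2 * a / (a + b) <= 2.
Proof. intros Ha Hb. destruct (Req_dec (a + b) 0) as [E|E].
  - rewrite E. unfold Rdiv. rewrite Rinv_0. lra.
  - split. apply Rmult_le_pos; [lra| left; apply Rinv_0_lt_compat; lra].
    apply (Rmult_le_reg_r (a+b)). lra. unfold Rdiv. rewrite Rmult_assoc, Rinv_l by lra. lra. Qed.

Lemma consist (d : list obs) (g : obs -> R) (M0 Lc : nat) (P : nat -> nat -> obs -> bool)
  (a b : nat -> nat -> R) (w : nat -> R) (dl : R) :
  (forall o, In o d -> 0 <= g o) ->
  sumL g d <= INR (length d) ->
  (forall o, sumL (fun i => sumL (fun l => if P i l o then 1 else 0) (seq 0 Lc)) (seq 0 M0) <= 1) ->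
  (forall o i l, In o d -> (i < M0)%nat -> (l < Lc)%nat -> P i l o = true -> g o = 2 * a i l / (a i l + b i l)) ->
  (forall i l, (i < M0)%nat -> (l < Lc)%nat -> 0 <= a i l <= 1 /\ 0 <= b i l <= 1) ->
  (forall i, (i < M0)%nat -> sumL (a i) (seq 0 Lc) = 1 /\ sumL (b i) (seq 0 Lc) = 1) ->
  (forall i l, (i < M0)%nat -> (l < Lc)%nat -> INR (length d) * (w i * a i l - dl) <= cnt (P i l) d) ->
  0 <= dl -> (forall i, 0 <= w i) -> (0 < length d)%nat ->
  forall i0 l0, (i0 < M0)%nat -> (l0 < Lc)%nat ->
  w i0 * (a i0 l0 - b i0 l0)^2 / 4 <= (1 - sumL w (seq 0 M0)) + 2 * dl * INR M0 * INR Lc.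
Proof.
  intros Hg0 Hgs Hone HgP Hab Hsum Hcnt Hdl Hw Hn i0 l0 Hi0 Hl0.
  set (n := INR (length d)). assert (Hnp: 0 < n) by (apply lt_0_INR; auto).
  set (G := fun i l => 2 * a i l / (a i l + b i l)).
  assert (HG: forall i l, (i < M0)%nat -> (l < Lc)%nat -> 0 <= G i l <= 2).
  { intros i l Hi Hl. destruct (Hab i l Hi Hl). apply G_bounds; auto. }
  assert (S1: sumL (fun i => sumL (fun l => G i l * cnt (P i l) d) (seq 0 Lc)) (seq 0 M0) <= n).
  { eapply Rle_trans; [|apply Hgs].
    apply Rle_trans with (sumL (fun o => sumL (fun i => sumL (fun l => (if P i l o then 1 else 0) * g o) (seq 0 Lc)) (seq 0 M0)) d).
    - rewrite (sumL_swap (fun o i => sumL (fun l => (if P i l o then 1 else 0) * g o) (seq 0 Lc)) d (seq 0 M0)).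
      apply sumL_le. intros i Hi. apply in_seq in Hi.
      rewrite (sumL_swap (fun o l => (if P i l o then 1 else 0) * g o) d (seq 0 Lc)).
      apply sumL_le. intros l Hl. apply in_seq in Hl.
      unfold cnt. rewrite <- sumL_scal. right. apply sumL_ext. intros o Ho.
      destruct (P i l o) eqn:E. rewrite (HgP o i l Ho) by (auto; lia). unfold G. lra. lra.
    - apply sumL_le. intros o Ho.
      rewrite (sumL_ext _ (fun i => g o * sumL (fun l => if P i l o then 1 else 0) (seq 0 Lc))).
      rewrite sumL_scal. pose proof (Hone o). pose proof (Hg0 o Ho).
      replace (g o) with (g o * 1) at 2 by lra. apply Rmult_le_compat_l; auto.
      intros i _. rewrite <- sumL_scal. apply sumL_ext. intros; lra. }
  assert (S2: n * sumL (fun i => sumL (fun l => w i * a i l * G i l - dl * G i l) (seq 0 Lc)) (seq 0 M0) <= n).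
  { eapply Rle_trans; [|apply S1]. rewrite <- sumL_scal. apply sumL_le. intros i Hi; apply in_seq in Hi.
    rewrite <- sumL_scal. apply sumL_le. intros l Hl; apply in_seq in Hl.
    pose proof (Hcnt i l ltac:(lia) ltac:(lia)). pose proof (HG i l ltac:(lia) ltac:(lia)). fold n in H.
    replace (n * (w i * a i l * G i l - dl * G i l)) with (G i l * (n * (w i * a i l - dl))) by ring.
    apply Rmult_le_compat_l; lra. }
  assert (S3: sumL (fun i => sumL (fun l => w i * a i l * G i l) (seq 0 Lc)) (seq 0 M0) <= 1 + 2 * dl * INR M0 * INR Lc).
  { assert (S2': sumL (fun i => sumL (fun l => w i * a i l * G i l - dl * G i l) (seq 0 Lc)) (seq 0 M0) <= 1).
    { apply (Rmult_le_reg_l n); auto. lra. }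
    assert (sumL (fun i => sumL (fun l => dl * G i l) (seq 0 Lc)) (seq 0 M0) <= 2 * dl * INR M0 * INR Lc).
    { apply Rle_trans with (sumL (fun i => sumL (fun l => 2 * dl) (seq 0 Lc)) (seq 0 M0)).
      apply sumL_le. intros i Hi; apply in_seq in Hi. apply sumL_le. intros l Hl; apply in_seq in Hl.
      pose proof (HG i l ltac:(lia) ltac:(lia)). nra.
      right. rewrite (sumL_ext _ (fun _ => 2 * dl * INR Lc)). rewrite sumL_const, length_seq. ring.
      intros; rewrite sumL_const, length_seq; ring. }
    rewrite (sumL_ext _ (fun i => sumL (fun l => w i * a i l * G i l) (seq 0 Lc) - sumL (fun l => dl * G i l) (seq 0 Lc))) in S2'.
    rewrite sumL_minus in S2'. lra. intros; apply sumL_minus. }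
  assert (Low: forall i, (i < M0)%nat -> 1 + sumL (fun l => (a i l - b i l)^2/4) (seq 0 Lc) <= sumL (fun l => a i l * G i l) (seq 0 Lc)).
  { intros i Hi. destruct (Hsum i Hi) as [Ha1 Hb1].
    apply Rle_trans with (sumL (fun l => a i l + (a i l - b i l)/2 + (a i l - b i l)^2/4) (seq 0 Lc)).
    - rewrite !sumL_plus. rewrite (sumL_ext (fun l => (a i l - b i l)/2) (fun l => /2 * (a i l - b i l))) by (intros; lra).
      rewrite sumL_scal, sumL_minus. fold (sumL (a i) (seq 0 Lc)). rewrite Ha1, Hb1. lra.
    - apply sumL_le. intros l Hl; apply in_seq in Hl. destruct (Hab i l Hi ltac:(lia)). unfold G. apply term_ineq; auto. }
  assert (Dnn: forall i, (i < M0)%nat -> 0 <= sumL (fun l => (a i l - b i l)^2/4) (seq 0 Lc)).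
  { intros. apply sumL_nonneg. intros. assert (0 <= (a i a0 - b i a0)^2) by apply pow2_ge_0. lra. }
  assert (Dl0: (a i0 l0 - b i0 l0)^2/4 <= sumL (fun l => (a i0 l - b i0 l)^2/4) (seq 0 Lc)).
  { apply (sumL_single (fun l => (a i0 l - b i0 l)^2/4)). intros. assert (0 <= (a i0 a0 - b i0 a0)^2) by apply pow2_ge_0. lra.
    apply in_seq; lia. }
  assert (S4: sumL w (seq 0 M0) + w i0 * ((a i0 l0 - b i0 l0)^2/4) <= sumL (fun i => sumL (fun l => w i * a i l * G i l) (seq 0 Lc)) (seq 0 M0)).
  { rewrite (sumL_ext (fun i => sumL (fun l => w i * a i l * G i l) (seq 0 Lc)) (fun i => w i * sumL (fun l => a i l * G i l) (seq 0 Lc))).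
    2:{ intros; rewrite <- sumL_scal; apply sumL_ext; intros; ring. }
    assert (sumL (fun i => w i * ((a i i0 - a i i0) + 0)) (seq 0 M0) = 0) by (rewrite (sumL_ext _ (fun _ => 0)), sumL_const; [ring| intros; ring]).
    apply Rle_trans with (sumL w (seq 0 M0) + sumL (fun i => w i * (sumL (fun l => a i l * G i l) (seq 0 Lc) - 1)) (seq 0 M0)).
    - apply Rplus_le_compat_l.
      apply Rle_trans with (w i0 * (sumL (fun l => a i0 l * G i0 l) (seq 0 Lc) - 1)).
      + apply Rmult_le_compat_l; auto. pose proof (Low i0 Hi0). lra.
      + apply (sumL_single (fun i => w i * (sumL (fun l => a i l * G i l) (seq 0 Lc) - 1))).
        intros i Hi; apply in_seq in Hi. apply Rmult_le_pos; auto. pose proof (Low i ltac:(lia)). pose proof (Dnn i ltac:(lia)). lra.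
        apply in_seq; lia.
    - right. rewrite <- sumL_plus. apply sumL_ext. intros; ring. }
  lra.
Qed.

Lemma ind_sum (f : nat -> R) x a m : (a <= x < a + m)%nat ->
  sumL (fun k => (if Nat.eqb x k then 1 else 0) * f k) (seq a m) = f x.
Proof. revert a. induction m; intros a H; [lia|]. simpl. unfold sumL; simpl; fold (sumL (fun k => (if Nat.eqb x k then 1 else 0) * f k) (seq (S a) m)).
  destruct (Nat.eqb_spec x a).
  - subst. rewrite (sumL_ext _ (fun _ => 0)). rewrite sumL_const. lra.
    intros k Hk. apply in_seq in Hk. destruct (Nat.eqb_spec a k); [lia|lra].
  - rewrite IHm by lia. lra. Qed.

Lemma ind_sum0 (f : nat -> R) x a m : ~ (a <= x < a + m)%nat ->
  sumL (fun k => (if Nat.eqb x k then 1 else 0) * f k) (seq a m) = 0.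
Proof. intros H. rewrite (sumL_ext _ (fun _ => 0)). rewrite sumL_const; lra.
  intros k Hk. apply in_seq in Hk. destruct (Nat.eqb_spec x k); [subst; lia|lra]. Qed.

Lemma cnt_cons p o d : cnt p (o :: d) = (if p o then 1 else 0) + cnt p d.
Proof. reflexivity. Qed.

Lemma cnt_nonneg p d : 0 <= cnt p d.
Proof. unfold cnt. apply sumL_nonneg. intros; destruct (p a); lra. Qed.

Lemma cnt_ge1 p d o : In o d -> p o = true -> 1 <= cnt p d.
Proof. intros Ho Hp. unfold cnt. assert (H := sumL_single (fun o : obs => if p o then 1 else 0) d o).
  simpl in H. rewrite Hp in H. apply H; auto. intros; destruct (p a); lra. Qed.

Lemma cnt_len p d : INR (length (filter p d)) = cnt p d.
Proof. induction d as [|a d IH]; [reflexivity|]. rewrite cnt_cons. cbn [filter]. destruct (p a); cbn [length]; [rewrite S_INR|]; lra. Qed.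

Lemma cnt_filter p v d : cnt p (filter v d) = cnt (fun o : obs => p o && v o) d.
Proof. induction d as [|a d IH]; [reflexivity|]. cbn [filter]. rewrite (cnt_cons _ a d). destruct (v a); rewrite ?cnt_cons; rewrite IH; destruct (p a); simpl; lra. Qed.

Lemma cnt_all d : cnt (fun _ => true) d = INR (length d).
Proof. induction d as [|a d IHd]; [reflexivity|]. rewrite cnt_cons, IHd. change (length (a::d)) with (S (length d)). rewrite S_INR; lra. Qed.

Lemma cnt_pos_ex p d : 0 < cnt p d -> exists o, In o d /\ p o = true.
Proof. induction d as [|a d IH]; intros H. unfold cnt in H; simpl in H; lra.
  rewrite cnt_cons in H. destruct (p a) eqn:E. exists a; split; [left|]; auto.
  destruct IH as [o [Ho Hp]]. lra. exists o; split; [right|]; auto. Qed.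

Lemma regroup K (f : nat -> R) (d : list obs) : (forall o, In o d -> (snd o <= K)%nat) ->
  sumL (fun o : obs => f (snd o)) d = sumL (fun k => cnt (fun o : obs => Nat.eqb (snd o) k) d * f k) (seq 0 (S K)).
Proof. intros H. unfold cnt.
  rewrite (sumL_ext (fun k => sumL _ d * f k) (fun k => sumL (fun o : obs => (if Nat.eqb (snd o) k then 1 else 0) * f k) d)).
  2:{ intros. rewrite Rmult_comm. rewrite <- sumL_scal. apply sumL_ext. intros; lra. }
  rewrite <- (sumL_swap (fun (o : obs) (k : nat) => (if Nat.eqb (snd o) k then 1 else 0) * f k)).
  apply sumL_ext. intros o Ho. rewrite ind_sum; auto. pose proof (H o Ho). lia. Qed.

Lemma regroup_cnt K (v : obs -> bool) (d : list obs) : (forall o, In o d -> (snd o <= K)%nat) ->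
  sumL (fun k => cnt (fun o : obs => Nat.eqb (snd o) k && v o) d) (seq 0 (S K)) = cnt v d.
Proof. intros H. unfold cnt.
  rewrite <- (sumL_swap (fun (o : obs) (k : nat) => if Nat.eqb (snd o) k && v o then 1 else 0)).
  apply sumL_ext. intros o Ho.
  rewrite (sumL_ext _ (fun k => (if Nat.eqb (snd o) k then 1 else 0) * (if v o then 1 else 0))).
  rewrite ind_sum; auto. pose proof (H o Ho); lia.
  intros k _. destruct (Nat.eqb (snd o) k), (v o); simpl; lra. Qed.

Lemma prodL_split {A} (f : A -> R) v l : prodL f l = prodL f (filter v l) * prodL f (filter (fun a => negb (v a)) l).
Proof. induction l; simpl. unfold prodL; simpl; lra. destruct (v a); simpl; unfold prodL in *; simpl; rewrite IHl; lra. Qed.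

Lemma gibbs K (ds : list obs) (p : nat -> R) :
  (forall o, In o ds -> (snd o <= K)%nat) -> (0 < length ds)%nat ->
  (forall k, (k <= K)%nat -> 0 <= p k) -> sumL p (seq 0 (S K)) = 1 ->
  prodL (fun o : obs => cnt (fun o' => Nat.eqb (snd o') (snd o)) ds / INR (length ds)) ds <= prodL (fun o : obs => p (snd o)) ds ->
  forall k, (k <= K)%nat -> p k = cnt (fun o : obs => Nat.eqb (snd o) k) ds / INR (length ds).
Proof. intros HK Hn Hp0 Hp1 Hle.
  set (n := INR (length ds)). assert (Hnp: 0 < n) by (apply lt_0_INR; auto).
  set (q := fun k => cnt (fun o : obs => Nat.eqb (snd o) k) ds / n).
  assert (Hq: forall o, In o ds -> 0 < q (snd o)).
  { intros o Ho. unfold q. apply Rdiv_lt_0_compat; auto. pose proof (cnt_ge1 (fun o' => Nat.eqb (snd o') (snd o)) ds o Ho (Nat.eqb_refl _)). lra. }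
  assert (Hpp: forall o, In o ds -> 0 < p (snd o)).
  { apply prodL_pos_each. intros; apply Hp0; auto. eapply Rlt_le_trans; [|apply Hle]. apply prodL_pos; auto. }
  set (x := fun o : obs => p (snd o) / q (snd o)).
  assert (Hx: forall o, In o ds -> 0 < x o) by (intros; unfold x; apply Rdiv_lt_0_compat; auto).
  assert (Hlog: 0 <= sumL (fun o : obs => ln (x o)) ds).
  { rewrite <- ln_prodL by auto. rewrite <- ln_1. unfold x.
    rewrite (prodL_ext _ (fun o : obs => p (snd o) * / q (snd o))) by (intros; reflexivity).
    rewrite prodL_mult, prodL_inv. 2:{ intros o Ho; pose proof (Hq o Ho); lra. }
    assert (0 < prodL (fun o : obs => q (snd o)) ds) by (apply prodL_pos; auto).
    destruct (Req_dec (prodL (fun o : obs => p (snd o)) ds * / prodL (fun o : obs => q (snd o)) ds) 1) as [E|E]. rewrite E; lra.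
    left. apply ln_increasing. lra. apply (Rmult_lt_reg_r (prodL (fun o : obs => q (snd o)) ds)); auto.
    rewrite Rmult_assoc, Rinv_l by lra. rewrite Rmult_1_r, Rmult_1_l.
    assert (prodL (fun o : obs => q (snd o)) ds <= prodL (fun o : obs => p (snd o)) ds) by exact Hle.
    destruct (Req_dec (prodL (fun o : obs => q (snd o)) ds) (prodL (fun o : obs => p (snd o)) ds)) as [E2|E2].
    exfalso. apply E. rewrite E2. field. lra. lra. }
  assert (Hsx: sumL (fun o : obs => x o - 1) ds <= 0).
  { rewrite sumL_minus, sumL_const. fold n. unfold x.
    rewrite (regroup K (fun k => p k / q k)) by auto.
    apply Rle_trans with (sumL (fun k => n * p k) (seq 0 (S K)) - 1 * n).
    - apply Rplus_le_compat_r. apply sumL_le. intros k Hk. apply in_seq in Hk.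
      unfold q. pose proof (cnt_nonneg (fun o : obs => Nat.eqb (snd o) k) ds). pose proof (Hp0 k ltac:(lia)).
      destruct (Req_dec (cnt (fun o : obs => Nat.eqb (snd o) k) ds) 0) as [E|E].
      + rewrite E. nra.
      + right. field. split; lra.
    - rewrite sumL_scal, Hp1. lra. }
  assert (Heach: forall o, In o ds -> x o = 1).
  { intros o Ho. apply ln_eq_xm1; auto.
    assert (Hz := sumL_zero_each (fun o : obs => (x o - 1) - ln (x o)) ds).
    assert (E: (x o - 1) - ln (x o) = 0).
    { apply Hz; auto. intros a Ha. pose proof (ln_le_xm1 _ (Hx a Ha)). lra.
      rewrite sumL_minus. assert (0 <= sumL (fun a => (x a - 1) - ln (x a)) ds).
      apply sumL_nonneg. intros a Ha. pose proof (ln_le_xm1 _ (Hx a Ha)). lra. rewrite sumL_minus in H. lra. }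
    lra. }
  assert (Heq: forall o, In o ds -> p (snd o) = q (snd o)).
  { intros o Ho. pose proof (Heach o Ho). unfold x in H. pose proof (Hq o Ho).
    apply (Rmult_eq_reg_r (/ q (snd o))). rewrite Rinv_r by lra. exact H. apply Rinv_neq_0_compat; lra. }
  assert (Hq1: sumL q (seq 0 (S K)) = 1).
  { unfold q. rewrite (sumL_ext _ (fun k => / n * cnt (fun o : obs => Nat.eqb (snd o) k) ds)) by (intros; unfold Rdiv; ring).
    rewrite sumL_scal.
    assert (E: sumL (fun k => cnt (fun o : obs => Nat.eqb (snd o) k && true) ds) (seq 0 (S K)) = cnt (fun _ => true) ds)
      by (apply regroup_cnt; auto).
    rewrite (sumL_ext _ (fun k => cnt (fun o : obs => Nat.eqb (snd o) k && true) ds)) in * .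
    rewrite E, cnt_all. fold n. field. lra.
    intros k _. unfold cnt. apply sumL_ext. intros o _. rewrite andb_true_r. auto. }
  assert (Hnn: forall k, In k (seq 0 (S K)) -> 0 <= p k - q k).
  { intros k Hk. apply in_seq in Hk. destruct (Req_dec (cnt (fun o : obs => Nat.eqb (snd o) k) ds) 0) as [E|E].
    - unfold q. rewrite E. pose proof (Hp0 k ltac:(lia)). unfold Rdiv; rewrite Rmult_0_l; lra.
    - destruct (cnt_pos_ex (fun o : obs => Nat.eqb (snd o) k) ds) as [o [Ho Hk']].
      pose proof (cnt_nonneg (fun o : obs => Nat.eqb (snd o) k) ds). lra.
      apply Nat.eqb_eq in Hk'. rewrite <- Hk'. rewrite (Heq o Ho). lra. }
  intros k Hk. assert (Hz := sumL_zero_each (fun k => p k - q k) (seq 0 (S K)) Hnn).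
  assert (p k - q k = 0). { apply Hz. rewrite sumL_minus, Hp1, Hq1; lra. apply in_seq; lia. }
  unfold q in H. fold n. lra.
Qed.

Definition vs (c : nat -> R) (s : R) (o : obs) : bool := if Req_EM_T (c (fst o)) s then true else false.
Definition br (c : nat -> R) (d : list obs) (s : R) (k : nat) : R :=
  cnt (fun o : obs => Nat.eqb (snd o) k && vs c s o) d / cnt (vs c s) d.

Lemma valid_labels K w d : valid_data K w d -> forall o, In o d -> (snd o <= K)%nat.
Proof. intros Hv o Ho. unfold valid_data in Hv; rewrite Forall_forall in Hv. apply (Hv o Ho). Qed.

Lemma cnt_le_len p d : cnt p d <= INR (length d).
Proof. rewrite <- cnt_all. unfold cnt. apply sumL_le. intros; destruct (p a); lra. Qed.

Lemma breve_eq K c w d s k : valid_data K w d -> 0 < cnt (vs c s) d -> breve K c d k s = br c d s k.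
Proof. intros Hv Hc.
  assert (Hn: 0 < INR (length d)) by (pose proof (cnt_le_len (vs c s) d); lra).
  assert (HN: forall k, Nk c d k s = / INR (length d) * cnt (fun o : obs => Nat.eqb (snd o) k && vs c s o) d).
  { intros k'. unfold Nk. change (INR (length (filter (fun o:obs => Nat.eqb (snd o) k' && vs c s o) d)) / INR (length d) = / INR (length d) * cnt (fun o : obs => Nat.eqb (snd o) k' && vs c s o) d). rewrite (cnt_len (fun o : obs => Nat.eqb (snd o) k' && vs c s o) d). unfold Rdiv; ring. }
  assert (HT: Ntot K c d s = / INR (length d) * cnt (vs c s) d).
  { unfold Ntot. rewrite fold_sumL. rewrite (sumL_ext _ _ _ (fun k _ => HN k)). rewrite sumL_scal.
    rewrite regroup_cnt; auto. eapply valid_labels; eauto. }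
  unfold breve. destruct (Req_EM_T (Ntot K c d s) 0) as [E|E].
  - rewrite HT in E. assert (0 < / INR (length d)) by (apply Rinv_0_lt_compat; auto). nra.
  - rewrite HN, HT. unfold br. field. lra. Qed.

Lemma Fext_ext K F G k x : (forall j, (j < K)%nat -> F j x = G j x) -> Fext K F k x = Fext K G k x.
Proof. intros H. destruct (Nat.lt_ge_cases k K).
  - rewrite !Fext_lt by auto. auto.
  - rewrite !Fext_ge by auto. rewrite !Fplus_sumL. rewrite (sumL_ext _ (fun j => G j x)). auto.
    intros j Hj; apply in_seq in Hj; apply H; lia. Qed.

Lemma local K c w d F s (z : nat -> bool) :
  valid_data K w d -> inFK K c w F ->
  (forall G, inFK K c w G -> lik K c d G <= lik K c d F) -> 0 < lik K c d F ->
  0 < cnt (vs c s) d ->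
  (forall k, (k < K)%nat -> z k = true -> forall o, In o d -> snd o = k -> s < c (fst o)) ->
  (forall k, (k < K)%nat -> z k = false ->
      (forall x, inS c w x -> x < s -> F k x <= br c d s k) /\ (forall x, inS c w x -> s < x -> br c d s k <= F k x)) ->
  forall k, (k < K)%nat -> F k s = br c d s k.
Proof.
  intros Hv HF Hmax Hlik HC Hz Hnz.
  assert (Hlab := valid_labels K w d Hv).
  destruct (cnt_pos_ex _ _ HC) as [o0 [Ho0 Hvo0]].
  assert (Hs: inS c w s).
  { unfold vs in Hvo0. destruct (Req_EM_T (c (fst o0)) s) as [E|E]; [|discriminate]. rewrite <- E. eapply valid_data_inS; eauto. }
  set (C := cnt (vs c s) d). set (b := br c d s).
  assert (Hb0: forall k, 0 <= b k).
  { intros k. unfold b, br. unfold Rdiv. apply Rmult_le_pos. apply cnt_nonneg. left; apply Rinv_0_lt_compat; exact HC. }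
  assert (Hbsum: sumL b (seq 0 (S K)) = 1).
  { unfold b, br. rewrite (sumL_ext _ (fun k => / C * cnt (fun o : obs => Nat.eqb (snd o) k && vs c s o) d)) by (intros; unfold b, br, C, Rdiv; ring).
    rewrite sumL_scal, regroup_cnt by auto. fold C. apply Rinv_l. apply Rgt_not_eq. exact HC. }
  assert (HbK: sumL b (seq 0 K) = 1 - b K).
  { rewrite seq_S, sumL_app in Hbsum. change (sumL b [(0+K)%nat]) with (b K + 0) in Hbsum. lra. }
  set (F' := fun k x => if Rlt_dec x s then (if z k then 0 else F k x) else if Req_EM_T x s then b k else F k x).
  assert (F's: forall k, F' k s = b k).
  { intros k. unfold F'. destruct (Rlt_dec s s); [lra|]. destruct (Req_EM_T s s); [auto|lra]. }
  assert (F'gt: forall k x, s < x -> F' k x = F k x).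
  { intros k x H. unfold F'. destruct (Rlt_dec x s); [lra|]. destruct (Req_EM_T x s); [lra|auto]. }
  assert (F'lt: forall k x, x < s -> F' k x = if z k then 0 else F k x).
  { intros k x H. unfold F'. destruct (Rlt_dec x s); [auto|lra]. }
  destruct HF as [HF1 [HF2 HF3]].
  assert (Hle: forall k x, (k < K)%nat -> inS c w x -> x < s -> F' k x <= F k x).
  { intros k x Hk Hx H. rewrite F'lt by auto. destruct (z k); [apply HF1; auto|lra]. }
  assert (HF': inFK K c w F').
  { split; [|split].
    - intros k Hk x Hx. destruct (Rlt_dec x s) as [L|L].
      + rewrite F'lt by auto. destruct (z k); [lra|apply HF1; auto].
      + destruct (Req_EM_T x s) as [E|E]. subst. rewrite F's; auto. rewrite F'gt by lra. apply HF1; auto.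
    - intros k Hk x y Hx Hy Hxy.
      destruct (Rlt_dec y s) as [Ly|Ly].
      + rewrite !F'lt by lra. destruct (z k); [lra|apply HF2; auto].
      + destruct (Req_EM_T y s) as [Ey|Ey].
        * subst y. rewrite F's. destruct (Req_EM_T x s) as [Ex|Ex]. subst; rewrite F's; lra.
          rewrite F'lt by lra. destruct (z k) eqn:Z. apply Hb0. apply (proj1 (Hnz k Hk Z)); auto; lra.
        * assert (Hys: s < y) by lra. rewrite (F'gt k y) by lra.
          destruct (Rlt_dec x s) as [Lx|Lx].
          -- rewrite F'lt by auto. destruct (z k); [apply HF1; auto|apply HF2; auto].
          -- destruct (Req_EM_T x s) as [Ex|Ex].
             ++ subst x. rewrite F's. destruct (z k) eqn:Z.
                ** unfold b, br. replace (cnt (fun o : obs => Nat.eqb (snd o) k && vs c s o) d) with 0.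
                   unfold Rdiv; rewrite Rmult_0_l. apply HF1; auto.
                   symmetry. unfold cnt. rewrite (sumL_ext _ (fun _ => 0)). rewrite sumL_const; lra.
                   intros o Ho. destruct (Nat.eqb_spec (snd o) k) as [Ek|Ek]; simpl; auto.
                   unfold vs. destruct (Req_EM_T (c (fst o)) s) as [E|E]; auto.
                   pose proof (Hz k Hk Z o Ho Ek). lra.
                ** apply (proj2 (Hnz k Hk Z)); auto.
             ++ rewrite F'gt by lra. apply HF2; auto.
    - intros x Hx. destruct (Rlt_dec x s) as [L|L].
      + eapply Rle_trans; [|apply (HF3 x Hx)]. rewrite !Fplus_sumL. apply sumL_le.
        intros k Hk; apply in_seq in Hk. apply Hle; auto; lia.
      + destruct (Req_EM_T x s) as [E|E].
        * subst. rewrite Fplus_sumL. rewrite (sumL_ext _ b) by (intros; apply F's). rewrite HbK. pose proof (Hb0 K). lra.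
        * rewrite Fplus_sumL. rewrite (sumL_ext _ (fun k => F k x)) by (intros; apply F'gt; lra). rewrite <- Fplus_sumL. auto. }
  assert (HFb: inFK K c w F) by (split; auto).
  assert (Hlik' := Hmax F' HF').
  rewrite (lik_prodL K c d F'), (lik_prodL K c d F) in Hlik'. rewrite (lik_prodL K c d F) in Hlik.
  rewrite (prodL_split (fun o : obs => Fext K F' (snd o) (c (fst o))) (vs c s) d),
    (prodL_split (fun o : obs => Fext K F (snd o) (c (fst o))) (vs c s) d) in Hlik'.
  rewrite (prodL_split (fun o : obs => Fext K F (snd o) (c (fst o))) (vs c s) d) in Hlik.
  set (ds := filter (vs c s) d) in *. set (dn := filter (fun a => negb (vs c s a)) d) in *.
  assert (Hds: forall o, In o ds -> In o d /\ c (fst o) = s).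
  { intros o Ho. unfold ds in Ho. apply filter_In in Ho. destruct Ho as [Ho V]. split; auto.
    unfold vs in V. destruct (Req_EM_T (c (fst o)) s); auto; discriminate. }
  assert (Hdn: forall o, In o dn -> In o d /\ c (fst o) <> s).
  { intros o Ho. unfold dn in Ho. apply filter_In in Ho. destruct Ho as [Ho V]. split; auto.
    unfold vs in V. destruct (Req_EM_T (c (fst o)) s); auto; discriminate. }
  assert (HFext's: forall k, (k <= K)%nat -> Fext K F' k s = b k).
  { intros k Hk. destruct (Nat.lt_ge_cases k K).
    - rewrite Fext_lt by auto. apply F's.
    - assert (k = K) by lia. subst. rewrite Fext_ge by lia. rewrite Fplus_sumL, (sumL_ext _ b) by (intros; apply F's). lra. }
  assert (Ein': prodL (fun o : obs => Fext K F' (snd o) (c (fst o))) ds = prodL (fun o : obs => b (snd o)) ds).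
  { apply prodL_ext. intros o Ho. destruct (Hds o Ho) as [H1 H2]. rewrite H2. apply HFext's. apply Hlab; auto. }
  assert (Hout: prodL (fun o : obs => Fext K F (snd o) (c (fst o))) dn <= prodL (fun o : obs => Fext K F' (snd o) (c (fst o))) dn).
  { apply prodL_le. intros o Ho. destruct (Hdn o Ho) as [H1 H2]. set (x := c (fst o)) in *.
    assert (Hx: inS c w x) by (eapply valid_data_inS; eauto).
    split. apply (Fext_nonneg K c w); auto.
    destruct (Rlt_dec x s) as [L|L].
    - destruct (Nat.lt_ge_cases (snd o) K) as [Hk|Hk].
      + rewrite !Fext_lt by auto. rewrite F'lt by auto. destruct (z (snd o)) eqn:Z.
        * pose proof (Hz _ Hk Z o H1 eq_refl). unfold x in L. lra.
        * lra.
      + rewrite !Fext_ge by auto. rewrite !Fplus_sumL. assert (sumL (fun j => F' j x) (seq 0 K) <= sumL (fun j => F j x) (seq 0 K)).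
        apply sumL_le. intros j Hj; apply in_seq in Hj. apply Hle; auto; lia. lra.
    - right. apply Fext_ext. intros j Hj. symmetry. apply F'gt. lra. }
  assert (Hin0: 0 <= prodL (fun o : obs => Fext K F (snd o) (c (fst o))) ds).
  { apply prodL_nonneg. intros o Ho. destruct (Hds o Ho). apply (Fext_nonneg K c w); auto. eapply valid_data_inS; eauto. }
  assert (Hout0: 0 <= prodL (fun o : obs => Fext K F (snd o) (c (fst o))) dn).
  { apply prodL_nonneg. intros o Ho. destruct (Hdn o Ho). apply (Fext_nonneg K c w); auto. eapply valid_data_inS; eauto. }
  assert (Houtp: 0 < prodL (fun o : obs => Fext K F (snd o) (c (fst o))) dn).
  { destruct (Req_dec (prodL (fun o : obs => Fext K F (snd o) (c (fst o))) dn) 0) as [E|E]; [|lra]. exfalso.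
    assert (Hlik2: 0 < prodL (fun o : obs => Fext K F (snd o) (c (fst o))) ds * prodL (fun o : obs => Fext K F (snd o) (c (fst o))) dn) by exact Hlik.
    rewrite E in Hlik2. lra. }
  assert (Hin'p: 0 < prodL (fun o : obs => b (snd o)) ds).
  { apply prodL_pos. intros o Ho. destruct (Hds o Ho) as [H1 H2]. unfold b, br. apply Rdiv_lt_0_compat; auto.
    assert (1 <= cnt (fun o' : obs => Nat.eqb (snd o') (snd o) && vs c s o') d).
    { apply (cnt_ge1 _ d o H1). rewrite Nat.eqb_refl. simpl. unfold vs. destruct (Req_EM_T (c (fst o)) s); auto. }
    lra. }
  assert (Hin: prodL (fun o : obs => b (snd o)) ds <= prodL (fun o : obs => Fext K F (snd o) (c (fst o))) ds).
  { apply (Rmult_le_reg_r (prodL (fun o : obs => Fext K F (snd o) (c (fst o))) dn)); auto.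
    assert (Hl3: prodL (fun o : obs => Fext K F' (snd o) (c (fst o))) ds * prodL (fun o : obs => Fext K F' (snd o) (c (fst o))) dn <=
      prodL (fun o : obs => Fext K F (snd o) (c (fst o))) ds * prodL (fun o : obs => Fext K F (snd o) (c (fst o))) dn) by exact Hlik'.
    rewrite Ein' in Hl3.
    eapply Rle_trans; [|apply Hl3]. apply Rmult_le_compat_l; lra. }
  assert (Hlen: INR (length ds) = C) by (unfold ds; rewrite cnt_len; reflexivity).
  assert (Hg := gibbs K ds (fun k => Fext K F k s)).
  assert (Hres: forall k, (k <= K)%nat -> Fext K F k s = cnt (fun o : obs => Nat.eqb (snd o) k) ds / INR (length ds)).
  { apply Hg.
    - intros o Ho. apply Hlab. apply (Hds o Ho).
    - apply INR_lt. simpl. rewrite Hlen. exact HC.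
    - intros; apply (Fext_nonneg K c w); auto.
    - apply Fext_sum.
    - eapply Rle_trans; [|eapply Rle_trans; [apply Hin|]].
      + right. apply prodL_ext. intros o Ho. unfold b, br. rewrite Hlen. unfold ds. rewrite cnt_filter. reflexivity.
      + right. apply prodL_ext. intros o Ho. destruct (Hds o Ho) as [_ H2]. rewrite H2. reflexivity. }
  intros k Hk. pose proof (Hres k ltac:(lia)). rewrite Fext_lt in H by auto. rewrite H.
  rewrite Hlen. unfold ds. rewrite cnt_filter. reflexivity.
Qed.

Fixpoint allL (O : list obs) (n : nat) : list (list obs) :=
  match n with
  | O => [[]]
  | S m => flat_map (fun o => map (cons o) (allL O m)) O
  end.

Lemma allL_S O n : allL O (S n) = flat_map (fun o => map (cons o) (allL O n)) O.
Proof. reflexivity. Qed.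

Lemma sum_allL O n (f : obs -> R) (h : list obs -> R) :
  sumL (fun d => prodL f d * h d) (allL O (S n)) =
  sumL (fun o => f o * sumL (fun d => prodL f d * h (o :: d)) (allL O n)) O.
Proof. rewrite allL_S, sumL_flat_map. apply sumL_ext. intros o _. rewrite sumL_map, <- sumL_scal.
  apply sumL_ext. intros d _. unfold prodL; simpl. ring. Qed.

Lemma allL_in O n d : In d (allL O n) -> length d = n /\ forall o, In o d -> In o O.
Proof. revert d. induction n; intros d H; simpl in H.
  - destruct H as [<-|[]]. split; auto. intros o [].
  - apply in_flat_map in H. destruct H as [o [Ho H]]. apply in_map_iff in H. destruct H as [d' [<- H]].
    destruct (IHn d' H) as [H1 H2]. split. simpl; auto. intros o' [<-|Ho']; auto. Qed.

Lemma flat_cons_nodup (T : list (list obs)) (O : list obs) : NoDup T -> NoDup O ->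
  NoDup (flat_map (fun o => map (cons o) T) O).
Proof. intros HT HO. induction HO as [|o O' Hno HO' IH]; simpl. constructor.
  apply NoDup_app; auto.
  - apply NoDup_map_NoDup_ForallPairs; auto. intros x y _ _ E; inversion E; auto.
  - intros x Hx Hx'. apply in_map_iff in Hx. destruct Hx as [d [<- _]].
    apply in_flat_map in Hx'. destruct Hx' as [o' [Ho' Hx']]. apply in_map_iff in Hx'.
    destruct Hx' as [d' [E _]]. inversion E; subst. auto. Qed.

Lemma allL_nodup O n : NoDup O -> NoDup (allL O n).
Proof. intros HO. induction n; simpl. constructor. intros []. constructor.
  apply flat_cons_nodup; auto. Qed.

Definition indc (P : obs -> bool) (o : obs) : R := if P o then 1 else 0.

Lemma cnt_cons' P o d : cnt P (o :: d) = indc P o + cnt P d.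
Proof. reflexivity. Qed.

Lemma mass_allL O n (f : obs -> R) : sumL (prodL f) (allL O n) = (sumL f O) ^ n.
Proof. induction n.
  - simpl. unfold sumL, prodL; simpl. lra.
  - rewrite (sumL_ext _ (fun d => prodL f d * 1)) by (intros; ring).
    rewrite sum_allL. rewrite (sumL_ext _ (fun o => sumL (prodL f) (allL O n) * f o)).
    rewrite sumL_scal, IHn. simpl. ring.
    intros o _. rewrite Rmult_comm. f_equal. apply sumL_ext. intros; ring. Qed.

Lemma moment1 O n (f : obs -> R) (P : obs -> bool) (q : R) :
  sumL (fun o => indc P o * f o) O = q * sumL f O ->
  sumL (fun d => prodL f d * (cnt P d - INR n * q)) (allL O n) = 0.
Proof. intros Hq. induction n.
  - simpl. unfold sumL, prodL, cnt; simpl. ring.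
  - rewrite sum_allL.
    rewrite (sumL_ext _ (fun o => f o * ((indc P o - q) * (sumL f O)^n))). 
    + rewrite (sumL_ext _ (fun o => (sumL f O)^n * (indc P o * f o - q * f o))) by (intros; ring).
      rewrite sumL_scal, sumL_minus, sumL_scal, Hq. ring.
    + intros o _. f_equal.
      rewrite (sumL_ext _ (fun d => (indc P o - q) * prodL f d + prodL f d * (cnt P d - INR n * q))).
      rewrite sumL_plus, IHn, sumL_scal. fold (sumL (prodL f) (allL O n)). 
      change (sumL (fun d => prodL f d) (allL O n)) with (sumL (prodL f) (allL O n)). rewrite mass_allL. ring.
      intros d _. rewrite cnt_cons'. rewrite S_INR. ring. Qed.

Lemma moment2 O n (f : obs -> R) (P : obs -> bool) (q : R) :
  sumL (fun o => indc P o * f o) O = q * sumL f O ->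
  sumL (fun d => prodL f d * (cnt P d - INR n * q)^2) (allL O n) = INR n * (sumL f O)^n * (q * (1 - q)).
Proof. intros Hq. set (Z := sumL f O).
  assert (Hv: sumL (fun o => f o * (indc P o - q)^2) O = Z * (q * (1 - q))).
  { rewrite (sumL_ext _ (fun o => (1 - 2 * q) * (indc P o * f o) + q^2 * f o)).
    rewrite sumL_plus, !sumL_scal, Hq. fold Z. ring.
    intros o _. unfold indc. destruct (P o); ring. }
  induction n.
  - simpl. unfold sumL, prodL, cnt; simpl. ring.
  - rewrite sum_allL.
    rewrite (sumL_ext _ (fun o => Z^n * (f o * (indc P o - q)^2) + (INR n * Z^n * (q * (1 - q))) * f o)).
    + rewrite sumL_plus, !sumL_scal, Hv. fold Z. rewrite S_INR. simpl. ring.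
    + intros o _.
      rewrite (sumL_ext _ (fun d => (indc P o - q)^2 * prodL f d + 2 * (indc P o - q) * (prodL f d * (cnt P d - INR n * q))
          + prodL f d * (cnt P d - INR n * q)^2)).
      rewrite !sumL_plus, !sumL_scal, IHn, (moment1 O n f P q Hq).
      change (sumL (fun d => prodL f d) (allL O n)) with (sumL (prodL f) (allL O n)). rewrite mass_allL. fold Z. ring.
      intros d _. rewrite cnt_cons'. rewrite S_INR. ring.
Qed.

Lemma sumL_filter {A} (h : A -> R) g l : sumL h (filter g l) = sumL (fun x => if g x then h x else 0) l.
Proof. induction l; simpl; auto. destruct (g a); unfold sumL in *; simpl; rewrite IHl; ring. Qed.

Definition qf (f : obs -> R) (O : list obs) (P : obs -> bool) : R := sumL (fun o => indc P o * f o) O / sumL f O.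

Definition goodb (f : obs -> R) (O : list obs) (cl : list (obs -> bool)) (dl : R) (n : nat) (d : list obs) : bool :=
  forallb (fun P => if Rle_dec (Rabs (cnt P d - INR n * qf f O P)) (INR n * dl) then true else false) cl.

Lemma good_mass O n (f : obs -> R) cl dl :
  (forall o, In o O -> 0 <= f o) -> 0 < sumL f O <= 1 -> (0 < n)%nat -> 0 < dl ->
  (sumL f O)^n - INR (length cl) / (4 * INR n * dl^2) <= sumL (prodL f) (filter (goodb f O cl dl n) (allL O n)).
Proof. intros Hf HZ Hn Hdl. set (Z := sumL f O) in *. set (g := goodb f O cl dl n).
  assert (Hnr: 0 < INR n) by (apply lt_0_INR; auto).
  assert (Hpsi: forall d, In d (allL O n) -> 0 <= prodL f d).
  { intros d Hd. apply prodL_nonneg. intros o Ho. apply Hf. apply (allL_in O n d Hd); auto. }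
  assert (Htot: sumL (prodL f) (allL O n) = sumL (prodL f) (filter g (allL O n)) + sumL (fun d => if g d then 0 else prodL f d) (allL O n)).
  { rewrite sumL_filter, <- sumL_plus. apply sumL_ext. intros d _. destruct (g d); ring. }
  rewrite mass_allL in Htot. fold Z in Htot.
  set (D := (INR n * dl)^2).
  assert (HD: 0 < D) by (unfold D; apply pow_lt; nra).
  assert (Hpt: forall d, In d (allL O n) -> (if g d then 0 else prodL f d) <=
      sumL (fun P => prodL f d * ((cnt P d - INR n * qf f O P)^2 / D)) cl).
  { intros d Hd. rewrite sumL_scal.
    assert (Hsq: forall P, 0 <= (cnt P d - INR n * qf f O P)^2 / D).
    { intros P. unfold Rdiv. apply Rmult_le_pos; [apply pow2_ge_0|left; apply Rinv_0_lt_compat; auto]. }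
    pose proof (Hpsi d Hd).
    destruct (g d) eqn:G.
    - apply Rmult_le_pos; auto. apply sumL_nonneg; auto.
    - unfold g, goodb in G. apply Bool.not_true_iff_false in G.
      assert (exists P, In P cl /\ ~ Rabs (cnt P d - INR n * qf f O P) <= INR n * dl).
      { apply NNPP. intros Hno. apply G. apply forallb_forall. intros P HP.
        destruct (Rle_dec (Rabs (cnt P d - INR n * qf f O P)) (INR n * dl)); auto. exfalso; apply Hno; exists P; auto. }
      destruct H0 as [P [HP HP2]].
      assert (1 <= (cnt P d - INR n * qf f O P)^2 / D).
      { apply (Rmult_le_reg_r D); auto. unfold Rdiv. rewrite Rmult_assoc, Rinv_l, Rmult_1_l, Rmult_1_r by lra.
        rewrite <- pow2_abs. unfold D. set (A := Rabs (cnt P d - INR n * qf f O P)) in *.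
        assert (0 < INR n * dl) by nra. nra. }
      assert (1 <= sumL (fun P => (cnt P d - INR n * qf f O P)^2 / D) cl).
      { eapply Rle_trans; [apply H0|]. apply (sumL_single (fun P => (cnt P d - INR n * qf f O P)^2 / D)); auto. }
      nra. }
  assert (Hbad: sumL (fun d => if g d then 0 else prodL f d) (allL O n) <= INR (length cl) / (4 * INR n * dl^2)).
  { eapply Rle_trans. apply sumL_le. exact Hpt.
    rewrite (sumL_swap (fun d P => prodL f d * ((cnt P d - INR n * qf f O P)^2 / D))).
    apply Rle_trans with (sumL (fun _ => 1 / (4 * INR n * dl^2)) cl).
    2:{ rewrite sumL_const. right. field. split; lra. }
    apply sumL_le. intros P HP.
    rewrite (sumL_ext _ (fun d => / D * (prodL f d * (cnt P d - INR n * qf f O P)^2))) by (intros; unfold Rdiv; ring).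
    rewrite sumL_scal, moment2. fold Z.
    assert (HZn: Z^n <= 1). { clear -HZ. induction n. simpl; lra. simpl. assert (0 <= Z^n) by (apply pow_le; lra). nra. }
    assert (0 <= Z^n) by (apply pow_le; lra).
    set (q := qf f O P). assert (q * (1 - q) <= /4) by (pose proof (pow2_ge_0 (q - /2)); nra).
    unfold D. apply (Rmult_le_reg_l ((INR n * dl)^2)). apply pow_lt; nra.
    rewrite <- Rmult_assoc, Rinv_r by (apply pow_nonzero; nra).
    replace ((INR n * dl) ^ 2 * (1 / (4 * INR n * dl ^ 2))) with (INR n / 4) by (field; split; lra).
    assert (0 <= q * (1 - q) -> INR n * Z ^ n * (q * (1 - q)) <= INR n / 4).
    { intros Ht. assert (Z^n * (q * (1 - q)) <= 1 * /4) by (apply Rmult_le_compat; lra).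
      rewrite Rmult_assoc. apply Rle_trans with (INR n * (1 * /4)). apply Rmult_le_compat_l; lra. lra. }
    destruct (Rle_dec 0 (q * (1 - q))). lra. assert (INR n * Z^n * (q * (1-q)) <= 0).
    { rewrite Rmult_assoc. assert (0 <= INR n * Z^n) by nra. nra. } nra.
    unfold qf. fold Z. field. apply Rgt_not_eq. lra. }
  lra.
Qed.

Lemma exists_nat_gt r : exists N : nat, r < INR N.
Proof. destruct (archimed (Rmax r 0)) as [H1 _].
  assert (0 <= IZR (up (Rmax r 0))) by (pose proof (Rmax_r r 0); lra).
  exists (Z.to_nat (up (Rmax r 0))). rewrite INR_IZR_INZ. rewrite Z2Nat.id.
  pose proof (Rmax_l r 0); lra. apply le_IZR; auto. Qed.

Lemma sumL_seq_sum (w : nat -> R) m : sumL w (seq 0 (S m)) = sum_f_R0 w m.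
Proof. induction m. unfold sumL; simpl; ring.
  rewrite seq_S, sumL_app, IHm. simpl. unfold sumL; simpl. ring. Qed.

Lemma partial_le1 (w : nat -> R) : (forall i, 0 <= w i) -> infinite_sum w 1 -> forall m, sumL w (seq 0 m) <= 1.
Proof. intros Hw Hs m. destruct m. unfold sumL; simpl; lra. rewrite sumL_seq_sum.
  apply Rnot_lt_le. intros H. destruct (Hs (sum_f_R0 w m - 1)) as [N HN]. lra.
  pose proof (HN (max N m) (Nat.le_max_l _ _)).
  assert (sum_f_R0 w m <= sum_f_R0 w (max N m)).
  { assert (forall k, sum_f_R0 w m <= sum_f_R0 w (m + k)).
    { induction k. rewrite Nat.add_0_r; lra. rewrite Nat.add_succ_r. simpl. pose proof (Hw (S (m + k))). lra. }
    replace (max N m) with (m + (max N m - m))%nat by lia. apply H1. }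
  unfold Rdist, Rabs in H0. destruct (Rcase_abs _); lra. Qed.

Lemma partial_cv (w : nat -> R) : infinite_sum w 1 -> forall e, 0 < e -> exists N, forall m, (N <= m)%nat -> 1 - e < sumL w (seq 0 m).
Proof. intros Hs e He. destruct (Hs e He) as [N HN]. exists (S N). intros m Hm.
  destruct m. lia. rewrite sumL_seq_sum. pose proof (HN m ltac:(lia)). unfold Rdist, Rabs in H. destruct (Rcase_abs _); lra. Qed.

Lemma bernoulli x n : 0 <= x <= 1 -> 1 - INR n * (1 - x) <= x ^ n.
Proof. intros Hx. induction n. simpl. lra. rewrite S_INR. simpl.
  assert (0 <= x ^ n) by (apply pow_le; lra).
  assert (x * (1 - INR n * (1 - x)) <= x * x ^ n) by (apply Rmult_le_compat_l; lra).
  assert (0 <= INR n) by apply pos_INR. assert (0 <= INR n * ((1 - x) * (1 - x))) by (apply Rmult_le_pos; nra). nra. Qed.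

Lemma fin_min (K : nat) (Q : nat -> R -> Prop) :
  (forall k e e', 0 < e' <= e -> Q k e -> Q k e') ->
  (forall k, (k < K)%nat -> exists e, 0 < e /\ Q k e) ->
  exists e, 0 < e /\ forall k, (k < K)%nat -> Q k e.
Proof. intros Hm. induction K; intros H.
  - exists 1. split. lra. intros; lia.
  - destruct IHK as [e1 [He1 H1]]. intros; apply H; lia.
    destruct (H K ltac:(lia)) as [e2 [He2 H2]].
    exists (Rmin e1 e2). split. apply Rmin_glb_lt; auto.
    intros k Hk. destruct (Nat.eq_dec k K).
    + subst. apply (Hm K e2); auto. split. apply Rmin_glb_lt; auto. apply Rmin_r.
    + apply (Hm k e1); auto. split. apply Rmin_glb_lt; auto. apply Rmin_l. apply H1; lia. Qed.

Definition posb (x : R) : bool := if Rlt_dec 0 x then true else false.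
Definition Icell (i l : nat) (o : obs) : bool := Nat.eqb i (fst o) && Nat.eqb l (snd o).

Lemma ind_le1 x a m : sumL (fun k => if Nat.eqb k x then 1 else 0) (seq a m) <= 1.
Proof. destruct (Nat.le_gt_cases a x); [destruct (Nat.lt_ge_cases x (a + m))|].
  - pose proof (ind_sum (fun _ => 1) x a m ltac:(lia)). simpl in H1.
    rewrite (sumL_ext _ (fun k => (if Nat.eqb x k then 1 else 0) * 1)). lra.
    intros k _. rewrite Nat.eqb_sym. ring.
  - rewrite (sumL_ext _ (fun _ => 0)). rewrite sumL_const; lra. intros k Hk; apply in_seq in Hk. destruct (Nat.eqb_spec k x); [lia|auto].
  - rewrite (sumL_ext _ (fun _ => 0)). rewrite sumL_const; lra. intros k Hk; apply in_seq in Hk. destruct (Nat.eqb_spec k x); [lia|auto]. Qed.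

Lemma one_cell (w : nat -> R) M0 Lc (o : obs) :
  sumL (fun i => sumL (fun l => if posb (w i) && Icell i l o then 1 else 0) (seq 0 Lc)) (seq 0 M0) <= 1.
Proof. eapply Rle_trans; [|apply (ind_le1 (fst o) 0 M0)]. apply sumL_le. intros i _.
  destruct (Nat.eqb_spec i (fst o)).
  - eapply Rle_trans; [|right; reflexivity]. eapply Rle_trans; [|apply (ind_le1 (snd o) 0 Lc)].
    apply sumL_le. intros l _. unfold Icell. destruct (posb (w i)); simpl; [|destruct (Nat.eqb l (snd o)); lra].
    subst. rewrite Nat.eqb_refl. simpl. lra.
  - right. rewrite (sumL_ext _ (fun _ => 0)). rewrite sumL_const. ring.
    intros l _. unfold Icell. destruct (posb (w i)); simpl; auto. destruct (Nat.eqb_spec i (fst o)); [lia|auto]. Qed.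

Lemma consist_app K' c w D F G M0 dl eta i0 :
  valid_data K' w D -> isMLE K' c w D F -> inFK K' c w G ->
  (forall o, In o D -> 0 < Fext K' G (snd o) (c (fst o))) ->
  (0 < length D)%nat -> 0 <= dl -> (forall i, 0 <= w i) ->
  (forall i l, (i < M0)%nat -> (l <= K')%nat -> 0 < w i ->
      INR (length D) * (w i * Fext K' G l (c i) - dl) <= cnt (Icell i l) D) ->
  (1 - sumL w (seq 0 M0)) + 2 * dl * INR M0 * INR (S K') < w i0 * eta^2 / 4 ->
  (i0 < M0)%nat -> 0 < w i0 -> 0 < eta ->
  forall l, (l <= K')%nat -> Rabs (Fext K' G l (c i0) - Fext K' F l (c i0)) < eta.
Proof.
  intros Hv [HF Hmax] HG Hpos Hn Hdl Hw Hcnt Hc Hi0 Hw0 Heta l Hl.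
  assert (Hb := mle_basic K' c w D F G Hv HF HG Hmax Hpos).
  set (a := fun i l => if posb (w i) then Fext K' G l (c i) else if Nat.eqb l 0 then 1 else 0).
  set (b := fun i l => if posb (w i) then Fext K' F l (c i) else if Nat.eqb l 0 then 1 else 0).
  assert (Hin: forall i, 0 < w i -> inS c w (c i)) by (intros i Hi; exists i; auto).
  assert (HC := consist D (fun o : obs => 2 * Fext K' G (snd o) (c (fst o)) / (Fext K' G (snd o) (c (fst o)) + Fext K' F (snd o) (c (fst o))))
     M0 (S K') (fun i l o => posb (w i) && Icell i l o) a b w dl).
  assert (Hw0b: posb (w i0) = true) by (unfold posb; destruct (Rlt_dec 0 (w i0)); auto; lra).
  assert (Hres: w i0 * (a i0 l - b i0 l)^2 / 4 <= (1 - sumL w (seq 0 M0)) + 2 * dl * INR M0 * INR (S K')).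
  { apply HC; auto.
    - intros o Ho. pose proof (Hpos o Ho). assert (0 <= Fext K' F (snd o) (c (fst o))) by (apply (Fext_nonneg K' c w); auto; eapply valid_data_inS; eauto).
      apply Rmult_le_pos. lra. left. apply Rinv_0_lt_compat. lra.
    - intros o. apply one_cell.
    - intros o i l' Ho Hi Hl' HP. apply andb_prop in HP. destruct HP as [Hp HI]. unfold Icell in HI.
      apply andb_prop in HI. destruct HI as [E1 E2]. apply Nat.eqb_eq in E1, E2. unfold a, b. rewrite Hp. subst. reflexivity.
    - intros i l' Hi Hl'. unfold a, b. destruct (posb (w i)) eqn:P.
      + unfold posb in P. destruct (Rlt_dec 0 (w i)); [|discriminate].
        split; split; try apply (Fext_nonneg K' c w); try apply (Fext_le1 K' c w); auto.
      + destruct (Nat.eqb l' 0); lra.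
    - intros i Hi. unfold a, b. destruct (posb (w i)) eqn:P.
      + unfold posb in P. destruct (Rlt_dec 0 (w i)); [|discriminate]. split; apply Fext_sum.
      + assert (E: sumL (fun l => if Nat.eqb l 0 then 1 else 0) (seq 0 (S K')) = 1).
        { simpl. unfold sumL; simpl. fold (sumL (fun l => if Nat.eqb l 0 then 1 else 0) (seq 1 K')).
          rewrite (sumL_ext _ (fun _ => 0)). rewrite sumL_const; ring. intros k Hk; apply in_seq in Hk. destruct (Nat.eqb_spec k 0); [lia|auto]. }
        split; exact E.
    - intros i l' Hi Hl'. unfold a. destruct (posb (w i)) eqn:P.
      + unfold posb in P. destruct (Rlt_dec 0 (w i)); [|discriminate].
        eapply Rle_trans. apply Hcnt; auto; lia. right. unfold cnt. apply sumL_ext. intros o _. simpl. reflexivity.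
      + unfold posb in P. destruct (Rlt_dec 0 (w i)); [discriminate|]. assert (w i = 0) by (pose proof (Hw i); lra).
        rewrite H. pose proof (cnt_nonneg (fun o : obs => false && Icell i l' o) D). pose proof (pos_INR (length D)). nra.
    - lia. }
  unfold a, b in Hres. rewrite Hw0b in Hres.
  assert (Hsq: (Fext K' G l (c i0) - Fext K' F l (c i0))^2 < eta^2).
  { apply (Rmult_lt_reg_l (w i0 / 4)). unfold Rdiv; apply Rmult_lt_0_compat; lra. lra. }
  rewrite <- (Rabs_pos_eq eta) by lra. apply Rsqr_lt_abs_0. unfold Rsqr. simpl in Hsq. lra.
Qed.

Definition relabel (k : nat) (o : obs) : obs := (fst o, if Nat.eqb (snd o) k then 0%nat else 1%nat).

Lemma cnt_map p f d : cnt p (map f d) = cnt (fun o => p (f o)) d.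
Proof. unfold cnt. rewrite sumL_map. reflexivity. Qed.
Lemma cnt_ext p p' d : (forall o, In o d -> p o = p' o) -> cnt p d = cnt p' d.
Proof. intros H. unfold cnt. apply sumL_ext. intros o Ho. rewrite H; auto. Qed.

Lemma Fext1_0 F x : Fext 1 F 0 x = F 0%nat x.
Proof. reflexivity. Qed.
Lemma Fext1_1 F x : Fext 1 F 1 x = 1 - F 0%nat x.
Proof. unfold Fext, Fplus. simpl. ring. Qed.

Lemma likk_lik c d k H : likk c d k H = lik 1 c (map (relabel k) d) (fun _ => H).
Proof. unfold likk, lik. induction d as [|o d IH]; simpl; auto. rewrite IH. f_equal.
  destruct (Nat.eqb (snd o) k); simpl. reflexivity. rewrite Fext1_1. reflexivity. Qed.

Lemma naive_isMLE K c w d Ft k : isNaive K c w d Ft -> (k < K)%nat -> isMLE 1 c w (map (relabel k) d) (fun _ => Ft k).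
Proof. intros Hn Hk. destruct (Hn k Hk) as [H1 H2]. split. exact H1.
  intros G HG. rewrite <- likk_lik.
  assert (E: lik 1 c (map (relabel k) d) G = lik 1 c (map (relabel k) d) (fun _ => G 0%nat)).
  { unfold lik. f_equal. apply map_ext. intros o. apply Fext_ext. intros j Hj. assert (j = 0%nat) by lia. subst. reflexivity. }
  rewrite E, <- likk_lik. apply H2.
  destruct HG as [G1 [G2 G3]]. split; [|split].
  - intros k' Hk'. apply G1; auto.
  - intros k' Hk'. apply G2; auto.
  - intros x Hx. pose proof (G3 x Hx). unfold Fplus in *. simpl in *. lra. Qed.

Lemma br_relabel c d s k : br c (map (relabel k) d) s 0 = br c d s k.
Proof. unfold br. rewrite !cnt_map. f_equal; apply cnt_ext; intros o _; unfold relabel, vs; simpl.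
  destruct (Nat.eqb_spec (snd o) k); destruct (Req_EM_T (c (fst o)) s); simpl; auto. Qed.

Lemma pobs_pos K F0 c w o : 0 < pobs K F0 c w o -> (forall i, 0 <= w i) ->
  0 < w (fst o) /\ (snd o <= K)%nat /\ 0 < Fext K F0 (snd o) (c (fst o)).
Proof. intros H Hw. unfold pobs in H. destruct (Nat.leb_spec (snd o) K); [|lra].
  pose proof (Hw (fst o)). destruct (Req_dec (w (fst o)) 0) as [E|E]. rewrite E in H; lra.
  split. lra. split. auto. destruct (Rlt_dec 0 (Fext K F0 (snd o) (c (fst o)))); auto.
  assert (w (fst o) * Fext K F0 (snd o) (c (fst o)) <= 0) by nra. lra. Qed.

Lemma pobs_il K F0 c w i l : (l <= K)%nat -> pobs K F0 c w (i, l) = w i * Fext K F0 l (c i).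
Proof. intros H. unfold pobs. simpl. destruct (Nat.leb_spec l K); [auto|lia]. Qed.

Definition Jcell (i k : nat) (o : obs) : bool := Nat.eqb i (fst o) && negb (Nat.eqb (snd o) k).
Definition Vcell (c : nat -> R) (s : R) (k : nat) (o : obs) : bool := Nat.eqb (snd o) k && vs c s o.

Lemma F0_mono K F0 : valid_F0 K F0 -> forall k, (k < K)%nat -> forall t u, t <= u -> F0 k t <= F0 k u.
Proof. intros [H _]. exact H. Qed.

Lemma sumL_abs {A} (f : A -> R) l : Rabs (sumL f l) <= sumL (fun a => Rabs (f a)) l.
Proof. induction l; simpl. unfold sumL; simpl; rewrite Rabs_R0; lra.
  unfold sumL in *; simpl. eapply Rle_trans. apply Rabs_triang. lra. Qed.

Lemma breve_close K c d s n W dl eta (F : nat -> R) :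
  (forall o, In o d -> (snd o <= K)%nat) -> n = INR (length d) ->
  (forall k, (k <= K)%nat -> 0 <= F k) -> sumL F (seq 0 (S K)) = 1 ->
  0 < W -> 0 < n -> 0 <= dl -> 0 < eta ->
  (forall k, (k <= K)%nat -> Rabs (cnt (Vcell c s k) d - n * (W * F k)) <= n * dl) ->
  (INR K + 1) * dl <= W / 2 -> 2 * (INR K + 2) * dl <= eta * W ->
  0 < cnt (vs c s) d /\ forall k, (k <= K)%nat -> Rabs (br c d s k - F k) <= eta.
Proof. intros Hl Hn HF0 HF1 HW Hnp Hdl Heta Hc Hd1 Hd2.
  assert (HC: cnt (vs c s) d = sumL (fun k => cnt (Vcell c s k) d) (seq 0 (S K))).
  { symmetry. apply regroup_cnt; auto. }
  assert (HCW: Rabs (cnt (vs c s) d - n * W) <= n * ((INR K + 1) * dl)).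
  { rewrite HC. replace (n * W) with (sumL (fun k => n * (W * F k)) (seq 0 (S K))).
    2:{ rewrite sumL_scal, sumL_scal, HF1. ring. }
    rewrite <- sumL_minus. eapply Rle_trans. apply sumL_abs.
    eapply Rle_trans. apply sumL_le with (g := fun _ => n * dl). intros k Hk; apply in_seq in Hk. apply Hc; lia.
    rewrite sumL_const, length_seq, S_INR. right; ring. }
  assert (HCp: n * W / 2 <= cnt (vs c s) d).
  { assert (n * ((INR K + 1) * dl) <= n * (W / 2)) by (apply Rmult_le_compat_l; lra).
    unfold Rabs in HCW; destruct (Rcase_abs _); lra. }
  assert (HnW: 0 < n * W / 2) by (unfold Rdiv; apply Rmult_lt_0_compat; [nra|lra]).
  split. lra.
  intros k Hk. set (C := cnt (vs c s) d) in *.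
  assert (HFk1: F k <= 1).
  { rewrite <- HF1. apply (sumL_single F). intros a Ha; apply in_seq in Ha; apply HF0; lia. apply in_seq; lia. }
  assert (E: br c d s k - F k = (cnt (Vcell c s k) d - F k * C) / C).
  { unfold br. change (cnt (fun o : obs => Nat.eqb (snd o) k && vs c s o) d) with (cnt (Vcell c s k) d). fold C. field. lra. }
  rewrite E. unfold Rdiv. rewrite Rabs_mult, Rabs_inv, (Rabs_pos_eq C) by lra.
  assert (Hnum: Rabs (cnt (Vcell c s k) d - F k * C) <= n * ((INR K + 2) * dl)).
  { replace (cnt (Vcell c s k) d - F k * C) with ((cnt (Vcell c s k) d - n * (W * F k)) + F k * (n * W - C)) by ring.
    assert (HFk0: 0 <= F k) by (apply HF0; auto).
    eapply Rle_trans. apply Rabs_triang. rewrite Rabs_mult, (Rabs_pos_eq (F k) HFk0).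
    pose proof (Hc k Hk). assert (Rabs (n * W - C) <= n * ((INR K + 1) * dl)) by (rewrite Rabs_minus_sym; auto).
    assert (F k * Rabs (n * W - C) <= 1 * (n * ((INR K + 1) * dl))).
    { apply Rmult_le_compat; [exact HFk0 | apply Rabs_pos | exact HFk1 | exact H0]. }
    nra. }
  apply (Rmult_le_reg_r C). lra. rewrite Rmult_assoc, Rinv_l, Rmult_1_r by lra.
  assert (n * ((INR K + 2) * dl) <= eta * C).
  { apply Rle_trans with (eta * (n * W / 2)). 2: apply Rmult_le_compat_l; lra.
    assert (E2: eta * (n * W / 2) = n * (eta * W / 2)) by (unfold Rdiv; ring). rewrite E2. apply Rmult_le_compat_l; lra. }
  lra.
Qed.

Lemma two_terms K c w F j k x : inFK K c w F -> inS c w x -> (j <= K)%nat -> (k <= K)%nat -> j <> k ->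
  Fext K F j x + Fext K F k x <= 1.
Proof. intros HF Hx Hj Hk Hjk. rewrite <- (Fext_sum K F x).
  set (h := fun l => Fext K F l x).
  assert (Hh: forall l, 0 <= h l) by (intros; apply (Fext_nonneg K c w); auto).
  rewrite (sumL_ext (fun l => Fext K F l x) (fun l => (if Nat.eqb l k then h l else 0) + (if Nat.eqb l k then 0 else h l)))
    by (intros l _; destruct (Nat.eqb l k); unfold h; ring).
  rewrite sumL_plus.
  assert (h k <= sumL (fun l => if Nat.eqb l k then h l else 0) (seq 0 (S K))).
  { assert (E := sumL_single (fun l => if Nat.eqb l k then h l else 0) (seq 0 (S K)) k). cbv beta in E. rewrite Nat.eqb_refl in E.
    apply E. intros l _. destruct (Nat.eqb l k); auto; lra. apply in_seq; lia. }
  assert (h j <= sumL (fun l => if Nat.eqb l k then 0 else h l) (seq 0 (S K))).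
  { assert (E := sumL_single (fun l => if Nat.eqb l k then 0 else h l) (seq 0 (S K)) j). cbv beta in E.
    destruct (Nat.eqb_spec j k); [lia|]. apply E. intros l _. destruct (Nat.eqb l k); auto; lra. apply in_seq; lia. }
  unfold h in *. lra. Qed.

Definition zf (F0 : nat -> R -> R) (s : R) (k : nat) : bool := if Req_EM_T (F0 k s) 0 then true else false.

Lemma det_event K F0 c w s Fhat Ftil im ip is eta M0 dl d :
  (1 <= K)%nat -> valid_F0 K F0 -> (forall i, 0 <= w i) ->
  (forall data, valid_data K w data -> isMLE K c w data (Fhat data)) ->
  (forall data, valid_data K w data -> isNaive K c w data (Ftil data)) ->
  0 < eta -> 0 < w im -> 0 < w ip -> 0 < w is -> c is = s ->
  (im < M0)%nat -> (ip < M0)%nat -> (is < M0)%nat -> 0 < dl ->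
  (forall x, inS c w x -> x < s -> forall k, (k < K)%nat -> F0 k s <> 0 -> x <= c im /\ F0 k (c im) + 2 * eta <= F0 k s) ->
  (forall x, inS c w x -> s < x -> forall k, (k < K)%nat -> F0 k s <> 0 -> c ip <= x /\ F0 k s + 2 * eta <= F0 k (c ip)) ->
  (1 - sumL w (seq 0 M0)) + 2 * dl * INR M0 * INR (S K) < Rmin (w im) (w ip) * eta^2 / 4 ->
  (INR K + 1) * dl <= w is / 2 -> 2 * (INR K + 2) * dl <= eta * w is ->
  (0 < length d)%nat ->
  (forall o, In o d -> 0 < pobs K F0 c w o) ->
  (forall i l, (i < M0)%nat -> (l <= K)%nat -> INR (length d) * (pobs K F0 c w (i, l) - dl) <= cnt (Icell i l) d) ->
  (forall i k, (i < M0)%nat -> (k < K)%nat -> INR (length d) * (w i * (1 - F0 k (c i)) - dl) <= cnt (Jcell i k) d) ->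
  (exists W, w is <= W /\ forall k, (k <= K)%nat -> Rabs (cnt (Vcell c s k) d - INR (length d) * (W * Fext K F0 k s)) <= INR (length d) * dl) ->
  event_at K c Fhat Ftil s d.
Proof.
  intros HK HF0v Hw Hhat Htil Heta Hwim Hwip Hwis Hcis Him Hip His Hdl HB HA Hbound Hd1 Hd2 Hn Hpos H2 H3 H4.
  set (n := INR (length d)). assert (Hnp: 0 < n) by (apply lt_0_INR; auto).
  assert (HF0: inFK K c w F0) by (apply valid_F0_inFK; auto).
  assert (Hmono := F0_mono K F0 HF0v).
  assert (Hv: valid_data K w d).
  { unfold valid_data. rewrite Forall_forall. intros o Ho. destruct (pobs_pos K F0 c w o (Hpos o Ho) Hw) as [A [B _]]. auto. }
  assert (Fpos: forall o, In o d -> 0 < Fext K F0 (snd o) (c (fst o))).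
  { intros o Ho. apply (pobs_pos K F0 c w o (Hpos o Ho) Hw). }
  assert (Hlab := valid_labels K w d Hv).
  assert (HinS: forall i, 0 < w i -> inS c w (c i)) by (intros i Hi; exists i; auto).
  assert (Hs: inS c w s) by (rewrite <- Hcis; auto).
  destruct H4 as [W [HW HWc]].
  destruct (breve_close K c d s n W dl eta (fun k => Fext K F0 k s) Hlab eq_refl) as [HC Hbr]; auto.
  { intros; apply (Fext_nonneg K c w); auto. }
  { apply Fext_sum. }
  { lra. }
  { lra. }
  { lra. }
  { apply Rle_trans with (eta * w is); auto. apply Rmult_le_compat_l; lra. }
  assert (Hbrk: forall k, (k < K)%nat -> Rabs (br c d s k - F0 k s) <= eta).
  { intros k Hk. pose proof (Hbr k ltac:(lia)). rewrite Fext_lt in H by auto. auto. }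
  assert (Hz: forall k, (k < K)%nat -> zf F0 s k = true -> forall o, In o d -> snd o = k -> s < c (fst o)).
  { intros k Hk Z o Ho Ek. unfold zf in Z. destruct (Req_EM_T (F0 k s) 0) as [E|E]; [|discriminate].
    pose proof (Fpos o Ho). rewrite Ek, Fext_lt in H by auto.
    destruct (Rlt_dec s (c (fst o))) as [L|L]; auto. pose proof (Hmono k Hk (c (fst o)) s ltac:(lra)). lra. }
  assert (Hmin1: Rmin (w im) (w ip) <= w im) by apply Rmin_l.
  assert (Hmin2: Rmin (w im) (w ip) <= w ip) by apply Rmin_r.
  assert (Heta2: 0 < eta^2) by (apply pow_lt; lra).
  set (F := Fhat d). assert (Hm := Hhat d Hv). fold F in Hm.
  assert (Hcons: forall i0, (i0 = im \/ i0 = ip) -> forall l, (l <= K)%nat ->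
            Rabs (Fext K F0 l (c i0) - Fext K F l (c i0)) < eta).
  { intros i0 Hi0. apply (consist_app K c w d F F0 M0 dl eta i0); auto; try lra.
    - intros i l Hi Hl Hwi. pose proof (H2 i l Hi Hl). rewrite pobs_il in H by auto. auto.
    - destruct Hi0; subst; nra.
    - destruct Hi0; subst; auto.
    - destruct Hi0; subst; auto. }
  assert (HlikF: 0 < lik K c d F).
  { destruct Hm as [_ Hmax]. eapply Rlt_le_trans; [|apply (Hmax F0 HF0)]. rewrite lik_prodL. apply prodL_pos; auto. }
  assert (Hloc: forall k, (k < K)%nat -> F k s = br c d s k).
  { apply (local K c w d F s (zf F0 s)); auto. apply Hm. apply Hm.
    intros k Hk Z. unfold zf in Z. destruct (Req_EM_T (F0 k s) 0) as [E|E]; [discriminate|].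
    destruct Hm as [[HF1 [HF2 HF3]] _]. pose proof (Hbrk k Hk).
    split.
    - intros x Hx Hxs. destruct (HB x Hx Hxs k Hk E) as [Hxm Hg].
      pose proof (Hcons im (or_introl eq_refl) k ltac:(lia)). rewrite !Fext_lt in H0 by auto.
      pose proof (HF2 k Hk x (c im) Hx (HinS im Hwim) Hxm).
      unfold Rabs in H, H0; destruct (Rcase_abs (br c d s k - F0 k s)); destruct (Rcase_abs (F0 k (c im) - F k (c im))); lra.
    - intros x Hx Hxs. destruct (HA x Hx Hxs k Hk E) as [Hxm Hg].
      pose proof (Hcons ip (or_intror eq_refl) k ltac:(lia)). rewrite !Fext_lt in H0 by auto.
      pose proof (HF2 k Hk (c ip) x (HinS ip Hwip) Hx Hxm).
      unfold Rabs in H, H0; destruct (Rcase_abs (br c d s k - F0 k s)); destruct (Rcase_abs (F0 k (c ip) - F k (c ip))); lra. }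
  assert (Hnaive: forall k, (k < K)%nat -> Ftil d k s = br c d s k).
  { intros k Hk. set (d' := map (relabel k) d). set (F1 := fun _ : nat => Ftil d k). set (G1 := fun _ : nat => F0 k).
    assert (Hv': valid_data 1 w d').
    { unfold valid_data, d'. rewrite Forall_forall. intros o' Ho'. apply in_map_iff in Ho'. destruct Ho' as [o [<- Ho]].
      unfold relabel; simpl. destruct (pobs_pos K F0 c w o (Hpos o Ho) Hw) as [A _]. split; auto. destruct (Nat.eqb (snd o) k); lia. }
    assert (Hm1: isMLE 1 c w d' F1) by (apply (naive_isMLE K); auto).
    assert (HG1: inFK 1 c w G1).
    { pose proof HF0 as HF0c. destruct HF0c as [A [B C]]. split; [|split].
      - intros k' Hk' x Hx. apply A; auto.
      - intros k' Hk' x y Hx Hy Hxy. apply B; auto.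
      - intros x Hx. unfold Fplus, G1; simpl. pose proof (Fext_le1 K c w F0 k x HF0 Hx). rewrite Fext_lt in H by auto. lra. }
    assert (Hpos1: forall o', In o' d' -> 0 < Fext 1 G1 (snd o') (c (fst o'))).
    { intros o' Ho'. unfold d' in Ho'. apply in_map_iff in Ho'. destruct Ho' as [o [<- Ho]]. unfold relabel; simpl.
      destruct (Nat.eqb_spec (snd o) k) as [E|E].
      - rewrite Fext1_0. unfold G1. pose proof (Fpos o Ho). rewrite E, Fext_lt in H by auto. auto.
      - rewrite Fext1_1. unfold G1. pose proof (Fpos o Ho).
        pose proof (two_terms K c w F0 (snd o) k (c (fst o)) HF0 (valid_data_inS K c w d o Hv Ho) (Hlab o Ho) ltac:(lia) E).
        rewrite (Fext_lt K F0 k) in H0 by auto. lra. }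
    assert (Hlen: length d' = length d) by (unfold d'; apply length_map).
    assert (Hcons1: forall i0, (i0 = im \/ i0 = ip) -> Rabs (F0 k (c i0) - Ftil d k (c i0)) < eta).
    { intros i0 Hi0. assert (R := consist_app 1 c w d' F1 G1 M0 dl eta i0 Hv' Hm1 HG1 Hpos1).
      enough (Rabs (Fext 1 G1 0 (c i0) - Fext 1 F1 0 (c i0)) < eta) by (rewrite !Fext1_0 in H; exact H).
      apply R; [rewrite Hlen; auto | lra | auto | | | destruct Hi0; subst; auto | destruct Hi0; subst; auto | lra | lia].
      - intros i l Hi Hl Hwi. rewrite Hlen. unfold d'. rewrite cnt_map.
        destruct l as [|[|l]]; [| |lia].
        + rewrite Fext1_0. unfold G1. eapply Rle_trans. 2:{ right. apply cnt_ext. intros o _. instantiate (1 := Icell i k).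
            unfold Icell, relabel; simpl. destruct (Nat.eqb_spec (snd o) k); subst; simpl.
            rewrite Nat.eqb_refl. reflexivity. destruct (Nat.eqb_spec k (snd o)); [lia|]. destruct (Nat.eqb i (fst o)); auto. }
          pose proof (H2 i k Hi ltac:(lia)). rewrite pobs_il, Fext_lt in H by lia. exact H.
        + rewrite Fext1_1. unfold G1. eapply Rle_trans. 2:{ right. apply cnt_ext. intros o _. instantiate (1 := Jcell i k).
            unfold Icell, Jcell, relabel; simpl. destruct (Nat.eqb_spec (snd o) k); simpl; auto. }
          apply H3; auto.
      - assert (HS: 2 <= INR (S K)) by (replace 2 with (INR 2) by (simpl; ring); apply le_INR; lia).
        replace (INR (S 1)) with 2 by (simpl; ring).
        assert (0 <= 2 * dl * INR M0) by (pose proof (pos_INR M0); nra).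
        assert (2 * dl * INR M0 * 2 <= 2 * dl * INR M0 * INR (S K)) by (apply Rmult_le_compat_l; lra).
        destruct Hi0; subst; nra. }
    assert (HlikF1: 0 < lik 1 c d' F1).
    { destruct Hm1 as [_ Hmax]. eapply Rlt_le_trans; [|apply (Hmax G1 HG1)]. rewrite lik_prodL. apply prodL_pos; auto. }
    assert (HC': 0 < cnt (vs c s) d').
    { unfold d'. rewrite cnt_map. erewrite cnt_ext. exact HC. intros o _. unfold vs, relabel; simpl. reflexivity. }
    rewrite <- (br_relabel c d s k). fold d'.
    change (Ftil d k s) with (F1 0%nat s).
    apply (local 1 c w d' F1 s (fun _ => zf F0 s k)); auto. apply Hm1. apply Hm1.
    - intros k' Hk' Z o' Ho' E'. assert (Hk0: k' = 0%nat) by lia. rewrite Hk0 in E'. unfold d' in Ho'. apply in_map_iff in Ho'. destruct Ho' as [o [<- Ho]].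
      unfold relabel in E' |- *; simpl in *. destruct (Nat.eqb_spec (snd o) k); [|discriminate].
      apply (Hz k Hk Z o Ho); auto.
    - intros k' Hk' Z. assert (k' = 0%nat) by lia. subst k'. unfold d'. rewrite br_relabel.
      unfold zf in Z. destruct (Req_EM_T (F0 k s) 0) as [E|E]; [discriminate|].
      destruct Hm1 as [[HF1 [HF2 HF3]] _]. pose proof (Hbrk k Hk). unfold F1 in *.
      split.
      + intros x Hx Hxs. destruct (HB x Hx Hxs k Hk E) as [Hxm Hg].
        pose proof (Hcons1 im (or_introl eq_refl)).
        pose proof (HF2 0%nat ltac:(lia) x (c im) Hx (HinS im Hwim) Hxm). simpl in H1.
        unfold Rabs in H, H0; destruct (Rcase_abs (br c d s k - F0 k s)); destruct (Rcase_abs (F0 k (c im) - Ftil d k (c im))); lra.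
      + intros x Hx Hxs. destruct (HA x Hx Hxs k Hk E) as [Hxm Hg].
        pose proof (Hcons1 ip (or_intror eq_refl)).
        pose proof (HF2 0%nat ltac:(lia) (c ip) x (HinS ip Hwip) Hx Hxm). simpl in H1.
        unfold Rabs in H, H0; destruct (Rcase_abs (br c d s k - F0 k s)); destruct (Rcase_abs (F0 k (c ip) - Ftil d k (c ip))); lra.
    }
  intros k Hk. unfold F in Hloc. rewrite (Hloc k Hk), (Hnaive k Hk). split; auto.
  symmetry. apply (breve_eq K c w d s k Hv HC).
Qed.

Lemma regular_data K F0 c w s : valid_F0 K F0 -> inS c w s -> regular K F0 c w s ->
  exists im ip is eta, 0 < eta /\ 0 < w im /\ 0 < w ip /\ 0 < w is /\ c is = s /\
  (forall x, inS c w x -> x < s -> forall k, (k < K)%nat -> F0 k s <> 0 -> x <= c im /\ F0 k (c im) + 2 * eta <= F0 k s) /\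
  (forall x, inS c w x -> s < x -> forall k, (k < K)%nat -> F0 k s <> 0 -> c ip <= x /\ F0 k s + 2 * eta <= F0 k (c ip)).
Proof. intros HF0 [is [Hwis Hcis]] Hreg.
  destruct Hreg as [Hall | [Hlo Hhi]].
  - exists is, is, is, 1. split. lra. split; auto. split; auto. split; auto. split; auto.
    split; intros x0 _ _ k Hk E; exfalso; apply E; auto.
  -
    assert (Lo: exists im, 0 < w im /\ forall k, (k < K)%nat -> F0 k s <> 0 -> exists e, 0 < e /\
               forall x, inS c w x -> x < s -> x <= c im /\ F0 k (c im) + 2 * e <= F0 k s).
    { destruct (classic (exists x, inS c w x /\ x < s)) as [Ex|NEx].
      - destruct (Hlo Ex) as [sm [[Hub _] [[im [Hwim Hcim]] Hgap]]]. exists im. split; auto.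
        intros k Hk E. destruct (Hgap k Hk) as [G|G]; [|contradiction].
        exists ((F0 k s - F0 k sm) / 2). split. lra. intros y Hx Hxs. rewrite Hcim. split. apply Hub. split; auto. lra.
      - exists is. split; auto. intros k Hk E. exists 1. split. lra. intros y Hx Hxs. exfalso. apply NEx. exists y; auto. }
    assert (Hi: exists ip, 0 < w ip /\ forall k, (k < K)%nat -> F0 k s <> 0 -> exists e, 0 < e /\
               forall x, inS c w x -> s < x -> c ip <= x /\ F0 k s + 2 * e <= F0 k (c ip)).
    { destruct (classic (exists x, inS c w x /\ s < x)) as [Ex|NEx].
      - destruct (Hhi Ex) as [sp [[Hlb _] [[ip [Hwip Hcip]] Hgap]]]. exists ip. split; auto.
        intros k Hk E. destruct (Hgap k Hk) as [G|G]; [|contradiction].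
        exists ((F0 k sp - F0 k s) / 2). split. lra. intros y Hx Hxs. rewrite Hcip. split. apply Hlb. split; auto. lra.
      - exists is. split; auto. intros k Hk E. exists 1. split. lra. intros y Hx Hxs. exfalso. apply NEx. exists y; auto. }
    destruct Lo as [im [Hwim Lo]]. destruct Hi as [ip [Hwip Hi]].
    destruct (fin_min K (fun k e => F0 k s <> 0 ->
        (forall x, inS c w x -> x < s -> x <= c im /\ F0 k (c im) + 2 * e <= F0 k s) /\
        (forall x, inS c w x -> s < x -> c ip <= x /\ F0 k s + 2 * e <= F0 k (c ip)))) as [eta [Heta H]].
    + intros k e e' He' Q E. destruct (Q E) as [Q1 Q2]. split.
      * intros y Hx Hxs. destruct (Q1 y Hx Hxs). split; auto; lra.
      * intros y Hx Hxs. destruct (Q2 y Hx Hxs). split; auto; lra.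
    + intros k Hk. destruct (classic (F0 k s = 0)) as [Z|Z].
      * exists 1. split. lra. intros E; contradiction.
      * destruct (Lo k Hk Z) as [e1 [He1 H1]]. destruct (Hi k Hk Z) as [e2 [He2 H2]].
        exists (Rmin e1 e2). split. apply Rmin_glb_lt; auto. intros _. split.
        -- intros y Hx Hxs. destruct (H1 y Hx Hxs). split; auto. pose proof (Rmin_l e1 e2). lra.
        -- intros y Hx Hxs. destruct (H2 y Hx Hxs). split; auto. pose proof (Rmin_r e1 e2). lra.
    + exists im, ip, is, eta. split; auto. split; auto. split; auto. split; auto. split; auto. split.
      * intros y Hx Hxs k Hk E. apply (proj1 (H k Hk E)); auto.
      * intros y Hx Hxs k Hk E. apply (proj2 (H k Hk E)); auto.
Qed.

Definition pairs (M K : nat) : list obs := flat_map (fun i => map (fun l => (i, l)) (seq 0 (S K))) (seq 0 M).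
Definition Olist K F0 c w M : list obs := filter (fun o => posb (pobs K F0 c w o)) (pairs M K).

Lemma pairs_nodup M K : NoDup (pairs M K).
Proof. unfold pairs. generalize (seq_NoDup M 0). generalize (seq 0 M). intros I HI.
  induction HI as [|i I' Hni HI' IH]; cbn [flat_map]. constructor.
  apply NoDup_app; auto.
  - apply NoDup_map_NoDup_ForallPairs. intros x y _ _ E; inversion E; auto. apply seq_NoDup.
  - intros x Hx Hx'. apply in_map_iff in Hx. destruct Hx as [l [<- _]].
    apply in_flat_map in Hx'. destruct Hx' as [i' [Hi' Hx']]. apply in_map_iff in Hx'.
    destruct Hx' as [l' [E _]]. inversion E; subst. auto. Qed.

Lemma Olist_nodup K F0 c w M : NoDup (Olist K F0 c w M).
Proof. apply NoDup_filter, pairs_nodup. Qed.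

Lemma Olist_in K F0 c w M o : In o (Olist K F0 c w M) -> 0 < pobs K F0 c w o.
Proof. intros H. apply filter_In in H. destruct H as [_ H]. unfold posb in H. destruct (Rlt_dec 0 _); auto; discriminate. Qed.

Lemma pobs_nonneg K F0 c w o : valid_F0 K F0 -> (forall i, 0 <= w i) -> 0 <= pobs K F0 c w o.
Proof. intros HF Hw. unfold pobs. destruct (Nat.leb (snd o) K); [|lra].
  destruct (Req_dec (w (fst o)) 0) as [E|E]. rewrite E; lra.
  apply Rmult_le_pos; auto. apply (Fext_nonneg K c w); auto. apply valid_F0_inFK; auto.
  exists (fst o). split; auto. pose proof (Hw (fst o)); lra. Qed.

Lemma sum_Olist K F0 c w M (h : obs -> R) : valid_F0 K F0 -> (forall i, 0 <= w i) ->
  (forall o, pobs K F0 c w o = 0 -> h o = 0) ->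
  sumL h (Olist K F0 c w M) = sumL (fun i => sumL (fun l => h (i, l)) (seq 0 (S K))) (seq 0 M).
Proof. intros HF Hw Hh. unfold Olist. rewrite sumL_filter. unfold pairs. rewrite sumL_flat_map.
  apply sumL_ext. intros i _. rewrite sumL_map. apply sumL_ext. intros l _.
  unfold posb. destruct (Rlt_dec 0 (pobs K F0 c w (i, l))); auto.
  symmetry. apply Hh. pose proof (pobs_nonneg K F0 c w (i,l) HF Hw). lra. Qed.

Lemma Z_Olist K F0 c w M : valid_F0 K F0 -> (forall i, 0 <= w i) ->
  sumL (pobs K F0 c w) (Olist K F0 c w M) = sumL w (seq 0 M).
Proof. intros HF Hw. rewrite sum_Olist; auto. apply sumL_ext. intros i _.
  rewrite (sumL_ext _ (fun l => w i * Fext K F0 l (c i))). rewrite sumL_scal, Fext_sum. ring.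
  intros l Hl. apply in_seq in Hl. apply pobs_il. lia. Qed.

Lemma ind_hz K F0 c w (P : obs -> bool) : forall o, pobs K F0 c w o = 0 -> indc P o * pobs K F0 c w o = 0.
Proof. intros o H. rewrite H. ring. Qed.

Lemma pM_I K F0 c w M i l : valid_F0 K F0 -> (forall i, 0 <= w i) -> (i < M)%nat -> (l <= K)%nat ->
  sumL (fun o => indc (Icell i l) o * pobs K F0 c w o) (Olist K F0 c w M) = pobs K F0 c w (i, l).
Proof. intros HF Hw Hi Hl. rewrite sum_Olist; auto using ind_hz.
  rewrite (sumL_ext _ (fun i' => (if Nat.eqb i i' then 1 else 0) * pobs K F0 c w (i', l))).
  apply (ind_sum (fun i' => pobs K F0 c w (i', l))). lia.
  intros i' _. rewrite (sumL_ext _ (fun l' => (if Nat.eqb i i' then 1 else 0) * ((if Nat.eqb l l' then 1 else 0) * pobs K F0 c w (i', l')))).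
  rewrite sumL_scal. rewrite (ind_sum (fun l' => pobs K F0 c w (i', l'))). reflexivity. lia.
  intros l' _. unfold indc, Icell; simpl. destruct (Nat.eqb i i'), (Nat.eqb l l'); simpl; ring. Qed.

Lemma pM_J K F0 c w M i k : valid_F0 K F0 -> (forall i, 0 <= w i) -> (i < M)%nat -> (k < K)%nat ->
  sumL (fun o => indc (Jcell i k) o * pobs K F0 c w o) (Olist K F0 c w M) = w i * (1 - F0 k (c i)).
Proof. intros HF Hw Hi Hk. rewrite sum_Olist; auto using ind_hz.
  rewrite (sumL_ext _ (fun i' => (if Nat.eqb i i' then 1 else 0) * (w i' * (1 - F0 k (c i'))))).
  apply (ind_sum (fun i' => w i' * (1 - F0 k (c i')))). lia.
  intros i' _. rewrite (sumL_ext _ (fun l' => (if Nat.eqb i i' then 1 else 0) * (pobs K F0 c w (i', l') - (if Nat.eqb k l' then 1 else 0) * pobs K F0 c w (i', l')))).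
  rewrite sumL_scal, sumL_minus. rewrite (ind_sum (fun l' => pobs K F0 c w (i', l'))) by lia.
  rewrite (sumL_ext (fun l' => pobs K F0 c w (i', l')) (fun l' => w i' * Fext K F0 l' (c i'))).
  rewrite sumL_scal, Fext_sum, pobs_il, Fext_lt by lia. ring.
  intros l' Hl'. apply in_seq in Hl'. apply pobs_il; lia.
  intros l' _. unfold indc, Jcell; simpl. rewrite (Nat.eqb_sym l' k). destruct (Nat.eqb i i'), (Nat.eqb k l'); simpl; ring. Qed.

Definition Wsum (c w : nat -> R) (s : R) (M : nat) : R := sumL (fun i => if Req_EM_T (c i) s then w i else 0) (seq 0 M).

Lemma pM_V K F0 c w M s k : valid_F0 K F0 -> (forall i, 0 <= w i) -> (k <= K)%nat ->
  sumL (fun o => indc (Vcell c s k) o * pobs K F0 c w o) (Olist K F0 c w M) = Wsum c w s M * Fext K F0 k s.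
Proof. intros HF Hw Hk. rewrite sum_Olist; auto using ind_hz. unfold Wsum. rewrite Rmult_comm, <- sumL_scal.
  apply sumL_ext. intros i' _.
  rewrite (sumL_ext _ (fun l' => (if Req_EM_T (c i') s then 1 else 0) * ((if Nat.eqb k l' then 1 else 0) * pobs K F0 c w (i', l')))).
  rewrite sumL_scal, (ind_sum (fun l' => pobs K F0 c w (i', l'))) by lia. rewrite pobs_il by auto.
  destruct (Req_EM_T (c i') s) as [E|E]. rewrite E. ring. ring.
  intros l' _. unfold indc, Vcell, vs; simpl. rewrite (Nat.eqb_sym l' k). destruct (Nat.eqb k l'), (Req_EM_T (c i') s); simpl; ring. Qed.

Lemma psample_prodL K F0 c w d : psample K F0 c w d = prodL (pobs K F0 c w) d.
Proof. unfold psample, prodL. induction d; simpl; auto. rewrite IHd. auto. Qed.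

Lemma fold_sumL_gen {A} (g : A -> R) l : fold_right Rplus 0 (map g l) = sumL g l.
Proof. induction l; simpl; auto. rewrite IHl; auto. Qed.

Lemma qf_close (f : obs -> R) O P dp : (forall o, In o O -> 0 <= f o) -> 1/2 <= sumL f O <= 1 ->
  2 * (1 - sumL f O) <= dp ->
  Rabs (qf f O P - sumL (fun o => indc P o * f o) O) <= dp.
Proof. intros Hf HZ Hd. unfold qf. set (Z := sumL f O) in *. set (p := sumL (fun o => indc P o * f o) O).
  assert (Hp0: 0 <= p). { apply sumL_nonneg. intros o Ho. unfold indc. destruct (P o); [rewrite Rmult_1_l; auto|lra]. }
  assert (HpZ: p <= Z). { apply sumL_le. intros o Ho. unfold indc. pose proof (Hf o Ho). destruct (P o); lra. }
  replace (p / Z - p) with (p * (1 - Z) / Z) by (field; lra).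
  rewrite Rabs_pos_eq. 2:{ unfold Rdiv. apply Rmult_le_pos. apply Rmult_le_pos; lra. left; apply Rinv_0_lt_compat; lra. }
  apply Rle_trans with (2 * (1 - Z)); auto.
  apply (Rmult_le_reg_r Z). lra. unfold Rdiv. rewrite Rmult_assoc, Rinv_l by lra. 
  assert (p * (1 - Z) <= Z * (1 - Z)) by (apply Rmult_le_compat_r; lra). nra. Qed.

Theorem lemma2 (K : nat) (HK : (1 <= K)%nat)
  (F0 : nat -> R -> R) (HF0 : valid_F0 K F0)
  (c w : nat -> R) (Hw0 : forall i, 0 <= w i)
  (Hw1 : infinite_sum w 1)
  (s : R) (Hs : inS c w s) (Hreg : regular K F0 c w s)
  (Fhat Ftil : list obs -> nat -> R -> R)
  (Hhat : forall data, valid_data K w data -> isMLE K c w data (Fhat data))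
  (Htil : forall data, valid_data K w data -> isNaive K c w data (Ftil data)) :
  forall eps, 0 < eps ->
    exists N : nat, forall n : nat, (N <= n)%nat ->
      exists L : list (list obs),
        NoDup L /\
        Forall (fun data => length data = n /\ event_at K c Fhat Ftil s data) L /\
        1 - eps <= fold_right Rplus 0 (map (psample K F0 c w) L).
Proof.
  intros eps Heps.
  destruct (regular_data K F0 c w s HF0 Hs Hreg) as [im [ip [is [eta [Heta [Hwim [Hwip [Hwis [Hcis [HB HA]]]]]]]]]].
  set (wmin := Rmin (w im) (w ip)).
  assert (Hwmin: 0 < wmin) by (apply Rmin_glb_lt; auto).
  assert (Heta2: 0 < eta^2) by (apply pow_lt; lra).
  destruct (partial_cv w Hw1 (wmin * eta^2 / 8)) as [N1 HN1]. { unfold Rdiv. apply Rmult_lt_0_compat; [nra|lra]. }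
  set (M0 := (N1 + im + ip + is + 1)%nat).
  assert (Htau: 1 - sumL w (seq 0 M0) < wmin * eta^2 / 8) by (pose proof (HN1 M0 ltac:(unfold M0; lia)); lra).
  assert (HM0: 0 <= INR M0) by apply pos_INR. assert (HKr: 1 <= INR K) by (replace 1 with (INR 1) by reflexivity; apply le_INR; auto).
  set (d1 := wmin * eta^2 / (32 * (INR M0 + 1) * (INR K + 1))).
  set (d2 := w is / (2 * (INR K + 1))). set (d3 := eta * w is / (2 * (INR K + 2))).
  set (dl := Rmin d1 (Rmin d2 d3)).
  assert (Hd1: 0 < d1) by (unfold d1; apply Rdiv_lt_0_compat; [nra|]; apply Rmult_lt_0_compat; lra).
  assert (Hd2: 0 < d2) by (unfold d2; apply Rdiv_lt_0_compat; lra).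
  assert (Hd3: 0 < d3) by (unfold d3; apply Rdiv_lt_0_compat; nra).
  assert (Hdl: 0 < dl) by (unfold dl; repeat apply Rmin_glb_lt; auto).
  assert (Hdl1: dl <= d1) by apply Rmin_l.
  assert (Hdl2: dl <= d2) by (eapply Rle_trans; [apply Rmin_r|apply Rmin_l]).
  assert (Hdl3: dl <= d3) by (eapply Rle_trans; [apply Rmin_r|apply Rmin_r]).
  assert (B1: (1 - sumL w (seq 0 M0)) + 2 * dl * INR M0 * INR (S K) < Rmin (w im) (w ip) * eta^2 / 4).
  { fold wmin. rewrite S_INR.
    assert (2 * dl * INR M0 * (INR K + 1) <= 2 * d1 * (INR M0 + 1) * (INR K + 1)).
    { apply Rmult_le_compat_r. lra. apply Rmult_le_compat; lra. }
    assert (2 * d1 * (INR M0 + 1) * (INR K + 1) = wmin * eta^2 / 16) by (unfold d1; field; split; apply Rgt_not_eq; lra). assert (0 < wmin * eta^2) by (apply Rmult_lt_0_compat; lra). lra. }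
  assert (B2: (INR K + 1) * dl <= w is / 2).
  { apply Rle_trans with ((INR K + 1) * d2). apply Rmult_le_compat_l; lra. unfold d2. right. field. lra. }
  assert (B3: 2 * (INR K + 2) * dl <= eta * w is).
  { apply Rle_trans with (2 * (INR K + 2) * d3). apply Rmult_le_compat_l; lra. unfold d3. right. field. lra. }
  set (dp := dl / 2). assert (Hdp: 0 < dp) by (unfold dp; lra).
  set (cl := map (fun p => Icell (fst p) (snd p)) (list_prod (seq 0 M0) (seq 0 (S K))) ++
             map (fun p => Jcell (fst p) (snd p)) (list_prod (seq 0 M0) (seq 0 K)) ++ map (Vcell c s) (seq 0 (S K))).
  destruct (exists_nat_gt (INR (length cl) / (2 * eps * dp^2))) as [N2 HN2].
  exists (S N2). intros n Hn.
  assert (Hnr: INR N2 < INR n) by (apply lt_INR; lia). assert (Hnp: 0 < INR n) by (pose proof (pos_INR N2); lra).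
  set (e3 := Rmin (1/2) (Rmin (dp/2) (eps / (2 * INR n)))).
  assert (He3: 0 < e3) by (unfold e3; repeat apply Rmin_glb_lt; try lra; apply Rdiv_lt_0_compat; lra).
  destruct (partial_cv w Hw1 e3 He3) as [N3 HN3].
  set (M := (N3 + M0)%nat).
  set (f := pobs K F0 c w). set (O := Olist K F0 c w M).
  assert (HZ: sumL f O = sumL w (seq 0 M)) by (apply Z_Olist; auto).
  assert (HZ1: sumL w (seq 0 M) <= 1) by (apply partial_le1; auto).
  assert (HZ2: 1 - e3 < sumL w (seq 0 M)) by (apply HN3; unfold M; lia).
  assert (He31: e3 <= 1/2) by apply Rmin_l.
  assert (He32: e3 <= dp/2) by (eapply Rle_trans; [apply Rmin_r|apply Rmin_l]).
  assert (He33: e3 <= eps / (2 * INR n)) by (eapply Rle_trans; [apply Rmin_r|apply Rmin_r]).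
  assert (Hf0: forall o, In o O -> 0 <= f o) by (intros; apply pobs_nonneg; auto).
  set (L := filter (goodb f O cl dp n) (allL O n)).
  exists L. split; [|split].
  - apply NoDup_filter, allL_nodup, Olist_nodup.
  - apply Forall_forall. intros d Hd. unfold L in Hd. apply filter_In in Hd. destruct Hd as [Hd Hg].
    destruct (allL_in O n d Hd) as [Hlen HinO]. split; auto.
    assert (Hgood: forall P, In P cl -> Rabs (cnt P d - INR n * sumL (fun o => indc P o * f o) O) <= INR n * dl).
    { intros P HP. unfold goodb in Hg. rewrite forallb_forall in Hg. pose proof (Hg P HP).
      destruct (Rle_dec (Rabs (cnt P d - INR n * qf f O P)) (INR n * dp)) as [Hr|Hr]; [|discriminate].
      assert (Hq := qf_close f O P dp Hf0 ltac:(lra) ltac:(lra)).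
      replace (cnt P d - INR n * sumL (fun o => indc P o * f o) O) with
        ((cnt P d - INR n * qf f O P) + INR n * (qf f O P - sumL (fun o => indc P o * f o) O)) by ring.
      eapply Rle_trans. apply Rabs_triang. rewrite Rabs_mult, (Rabs_pos_eq (INR n)) by lra.
      assert (INR n * Rabs (qf f O P - sumL (fun o => indc P o * f o) O) <= INR n * dp) by (apply Rmult_le_compat_l; lra).
      unfold dp in *. lra. }
    rewrite <- Hlen in Hgood.
    apply (det_event K F0 c w s Fhat Ftil im ip is eta M0 dl d); auto; try (unfold M0; lia).
    + intros o Ho. apply Olist_in with (M := M). apply HinO; auto.
    + intros i l Hi Hl. assert (HP: In (Icell i l) cl).
      { unfold cl. apply in_or_app. left. apply in_map_iff. exists (i, l). split; auto. apply in_prod; apply in_seq; lia. }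
      pose proof (Hgood _ HP). unfold f, O in H. rewrite pM_I in H by (auto; unfold M; lia).
      unfold Rabs in H. destruct (Rcase_abs _); nra.
    + intros i k Hi Hk. assert (HP: In (Jcell i k) cl).
      { unfold cl. apply in_or_app. right. apply in_or_app. left. apply in_map_iff. exists (i, k). split; auto. apply in_prod; apply in_seq; lia. }
      pose proof (Hgood _ HP). unfold f, O in H. rewrite pM_J in H by (auto; unfold M; lia).
      unfold Rabs in H. destruct (Rcase_abs _); nra.
    + exists (Wsum c w s M). split.
      * unfold Wsum. assert (E := sumL_single (fun i => if Req_EM_T (c i) s then w i else 0) (seq 0 M) is).
        cbv beta in E. destruct (Req_EM_T (c is) s); [|contradiction]. apply E.
        intros i _. destruct (Req_EM_T (c i) s); auto; lra. apply in_seq; unfold M, M0; lia.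
      * intros k Hk. assert (HP: In (Vcell c s k) cl).
        { unfold cl. apply in_or_app. right. apply in_or_app. right. apply in_map. apply in_seq; lia. }
        pose proof (Hgood _ HP). unfold f, O in H. rewrite pM_V in H by auto. exact H.
  - rewrite fold_sumL_gen. rewrite (sumL_ext _ (prodL f)) by (intros; apply psample_prodL).
    assert (Hm := good_mass O n f cl dp Hf0 ltac:(lra) ltac:(lia) Hdp). fold L in Hm.
    assert (Hb := bernoulli (sumL f O) n ltac:(lra)).
    assert (INR n * (1 - sumL f O) <= eps / 2).
    { apply Rle_trans with (INR n * e3). apply Rmult_le_compat_l; lra.
      apply Rle_trans with (INR n * (eps / (2 * INR n))). apply Rmult_le_compat_l; lra. right. field. lra. }
    assert (INR (length cl) / (4 * INR n * dp^2) <= eps / 2).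
    { assert (Hdp2: 0 < dp^2) by (apply pow_lt; lra).
      assert (INR (length cl) < 2 * eps * dp^2 * INR n).
      { apply (Rmult_lt_compat_l (2 * eps * dp^2)) in HN2; [|nra]. unfold Rdiv in HN2.
        replace (2 * eps * dp ^ 2 * (INR (length cl) * / (2 * eps * dp ^ 2))) with (INR (length cl)) in HN2 by (field; lra).
        assert (2 * eps * dp^2 * INR N2 <= 2 * eps * dp^2 * INR n) by (apply Rmult_le_compat_l; nra). lra. }
      apply (Rmult_le_reg_r (4 * INR n * dp^2)). nra. unfold Rdiv. rewrite Rmult_assoc, Rinv_l by nra.
      replace (eps * / 2 * (4 * INR n * dp ^ 2)) with (2 * eps * dp^2 * INR n) by (field; lra). lra. }
    lra.
Qed.
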